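(* Let $\gamma>1$ and $b\in\mathbb{R}$, and consider the ODE system $$\frac{dR_1}{dt}=-R_1^2+bR_2^2,\qquad \frac{dR_2}{dt}=-\frac{\gamma+1}{2}R_1R_2,$$ with initial data $(R_1(0),R_2(0))=(R_1^0,R_2^0)\in\mathbb{R}^2$. Then: (a) on any interval where the solution exists and $R_2\neq 0$, the quantity $\big(R_1^2+\frac{2b}{\gamma-1}R_2^2\big)|R_2|^{-\frac{4}{\gamma+1}}$ is constant; (b) the solution exists and remains bounded for all $t\ge 0$ if and only if one of the following holds: ($b\ge 0$ and $R_1^0\ge 0$); ($b>0$ and $R_2^0\ne 0$); ($b<0$, $R_1^0\ge 0$ and $(R_1^0)^2+\frac{2b}{\gamma-1}(R_2^0)^2\ge 0$); ($R_2^0=0$ and $R_1^0\ge 0$). In all other cases the solution becomes unbounded in finite time. *)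

(* Defs.v *)
From Stdlib Require Import Reals.
Open Scope R_scope.

Definition ode_on (b g a c : R) (R1 R2 : R -> R) : Prop :=
  forall t, a < t < c ->
    derivable_pt_lim R1 t (- (R1 t) ^ 2 + b * (R2 t) ^ 2) /\
    derivable_pt_lim R2 t (- ((g + 1) / 2) * R1 t * R2 t).

Definition right_cont0 (f : R -> R) : Prop :=
  forall eps, eps > 0 -> exists d, d > 0 /\
    forall t, 0 <= t < d -> Rabs (f t - f 0) < eps.

Definition ivp_sol_upto (b g T R10 R20 : R) (R1 R2 : R -> R) : Prop :=
  ode_on b g 0 T R1 R2 /\ right_cont0 R1 /\ right_cont0 R2 /\
  R1 0 = R10 /\ R2 0 = R20.

Definition ivp_sol_global (b g R10 R20 : R) (R1 R2 : R -> R) : Prop :=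
  (forall T, T > 0 -> ode_on b g 0 T R1 R2) /\ right_cont0 R1 /\ right_cont0 R2 /\
  R1 0 = R10 /\ R2 0 = R20.

Definition invariant (b g r1 r2 : R) : R :=
  (r1 ^ 2 + (2 * b / (g - 1)) * r2 ^ 2) * Rpower (Rabs r2) (- (4 / (g + 1))).

Definition global_condition (b g R10 R20 : R) : Prop :=
  (b >= 0 /\ R10 >= 0) \/
  (b > 0 /\ R20 <> 0) \/
  (b < 0 /\ R10 >= 0 /\ R10 ^ 2 + (2 * b / (g - 1)) * R20 ^ 2 >= 0) \/
  (R20 = 0 /\ R10 >= 0).

(* Main.v *)
Require Import Defs.
From Stdlib Require Import Reals.
From Stdlib Require Import Lra Lia Psatz Classical ClassicalEpsilon.
From Coquelicot Require Import Coquelicot.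
Open Scope R_scope.

Definition ct (f : R -> R) (x : R) : Prop :=
  forall eps, 0 < eps -> exists d, 0 < d /\ forall y, Rabs (y - x) < d -> Rabs (f y - f x) < eps.

Lemma ct_continuous f x : ct f x -> continuous f x.
Proof.
  intros H. apply continuity_pt_filterlim.
  intros eps Heps. destruct (H eps Heps) as [d [Hd H1]].
  exists d; split; [lra|]. intros y [_ Hy]. apply H1. exact Hy.
Qed.

Lemma continuous_ct f x : continuous f x -> ct f x.
Proof.
  intros H. apply continuity_pt_filterlim in H.
  intros eps Heps. destruct (H eps Heps) as [d [Hd H1]].
  exists d; split; [lra|]. intros y Hy.
  destruct (Req_dec y x) as [->|Hne].
  - rewrite Rminus_eq_0, Rabs_R0; lra.
  - apply H1. split; [split; [exact I| auto]| exact Hy].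
Qed.

Lemma derivable_ct f x l : derivable_pt_lim f x l -> ct f x.
Proof.
  intros H. apply continuous_ct. apply continuity_pt_filterlim.
  apply derivable_continuous_pt. exists l. exact H.
Qed.

Lemma ct_rc f : ct f 0 -> right_cont0 f.
Proof.
  intros H eps Heps. destruct (H eps Heps) as [d [Hd H1]].
  exists d; split; [lra|]. intros t Ht. apply H1. rewrite Rminus_0_r, Rabs_right; lra.
Qed.

Lemma rc_comp f h : right_cont0 f -> ct h (f 0) -> right_cont0 (fun t => h (f t)).
Proof.
  intros Hf Hh eps Heps. destruct (Hh eps Heps) as [d [Hd H1]].
  destruct (Hf d Hd) as [d' [Hd' H2]].
  exists d'; split; [lra|]. intros t Ht. apply H1, H2, Ht.
Qed.

Lemma rc_plus f g : right_cont0 f -> right_cont0 g -> right_cont0 (fun t => f t + g t).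
Proof.
  intros Hf Hg eps Heps.
  destruct (Hf (eps/2) ltac:(lra)) as [d1 [Hd1 H1]].
  destruct (Hg (eps/2) ltac:(lra)) as [d2 [Hd2 H2]].
  exists (Rmin d1 d2); split. { apply Rmin_pos; lra. }
  intros t Ht. assert (t < d1) by (pose proof (Rmin_l d1 d2); lra).
  assert (t < d2) by (pose proof (Rmin_r d1 d2); lra).
  specialize (H1 t ltac:(lra)). specialize (H2 t ltac:(lra)).
  replace (f t + g t - (f 0 + g 0)) with ((f t - f 0) + (g t - g 0)) by ring.
  eapply Rle_lt_trans; [apply Rabs_triang|]. lra.
Qed.

Lemma rc_mult f g : right_cont0 f -> right_cont0 g -> right_cont0 (fun t => f t * g t).
Proof.
  intros Hf Hg eps Heps.
  set (A := Rabs (f 0) + Rabs (g 0) + 1).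
  assert (HA : 0 < A) by (unfold A; pose proof (Rabs_pos (f 0)); pose proof (Rabs_pos (g 0)); lra).
  set (e := Rmin 1 (eps / (4 * A))).
  assert (He : 0 < e) by (apply Rmin_pos; [lra| apply Rdiv_lt_0_compat; lra]).
  assert (He1 : e <= 1) by apply Rmin_l.
  assert (He2 : e <= eps / (4*A)) by apply Rmin_r.
  destruct (Hf e He) as [d1 [Hd1 H1]].
  destruct (Hg e He) as [d2 [Hd2 H2]].
  exists (Rmin d1 d2); split. { apply Rmin_pos; lra. }
  intros t Ht. assert (t < d1) by (pose proof (Rmin_l d1 d2); lra).
  assert (t < d2) by (pose proof (Rmin_r d1 d2); lra).
  specialize (H1 t ltac:(lra)). specialize (H2 t ltac:(lra)).
  replace (f t * g t - f 0 * g 0) with ((f t - f 0) * g t + f 0 * (g t - g 0)) by ring.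
  eapply Rle_lt_trans; [apply Rabs_triang|]. rewrite !Rabs_mult.
  assert (Rabs (g t) <= Rabs (g 0) + 1).
  { replace (g t) with (g 0 + (g t - g 0)) by ring.
    eapply Rle_trans; [apply Rabs_triang|]. lra. }
  assert (Rabs (f t - f 0) * Rabs (g t) <= e * A).
  { pose proof (Rabs_pos (f 0)); pose proof (Rabs_pos (g 0)); apply Rmult_le_compat; try apply Rabs_pos; unfold A; lra. }
  assert (Rabs (f 0) * Rabs (g t - g 0) <= A * e).
  { pose proof (Rabs_pos (f 0)); pose proof (Rabs_pos (g 0)); apply Rmult_le_compat; try apply Rabs_pos; unfold A; lra. }
  assert (e * A <= eps / 4).
  { apply Rle_trans with (eps/(4*A) * A). apply Rmult_le_compat_r; lra.
    right; field; lra. }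
  clearbody e A. rewrite (Rmult_comm A e) in H5. lra.
Qed.

Lemma rc_const c : right_cont0 (fun _ => c).
Proof. intros eps He. exists 1. split; [lra|]. intros. rewrite Rminus_eq_0, Rabs_R0. lra. Qed.

Lemma rc_id : right_cont0 (fun t => t).
Proof. apply ct_rc. intros eps He; exists eps; split; [lra|]. intros; lra. Qed.

Lemma mono_int (f df : R -> R) a c :
  (forall t, a < t < c -> derivable_pt_lim f t (df t)) ->
  (forall t, a < t < c -> df t <= 0) ->
  forall s t, a < s -> s <= t -> t < c -> f t <= f s.
Proof.
  intros Hd Hn s t Hs Hst Ht.
  destruct (Req_dec s t) as [->|Hne]; [lra|].
  destruct (MVT_cor2 f df s t ltac:(lra)) as [x [Hx Hx2]].
  { intros x Hx. apply Hd. lra. }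
  assert (df x <= 0) by (apply Hn; lra).
  nra.
Qed.

Lemma mono0 (f df : R -> R) c :
  (forall t, 0 < t < c -> derivable_pt_lim f t (df t)) ->
  (forall t, 0 < t < c -> df t <= 0) -> right_cont0 f ->
  forall t, 0 < t < c -> f t <= f 0.
Proof.
  intros Hd Hn Hr t Ht.
  destruct (Rle_dec (f t) (f 0)) as [|Hgt]; [auto|exfalso].
  destruct (Hr (f t - f 0) ltac:(lra)) as [d [Hdp H1]].
  set (s := Rmin (d/2) t).
  assert (0 < s) by (apply Rmin_pos; lra).
  assert (s <= t) by apply Rmin_r. assert (s <= d/2) by apply Rmin_l.
  specialize (H1 s ltac:(lra)).
  pose proof (mono_int f df 0 c Hd Hn s t ltac:(lra) ltac:(lra) ltac:(lra)).
  apply Rabs_lt_between in H1. lra.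
Qed.

Lemma const_int (f : R -> R) a c :
  (forall t, a < t < c -> derivable_pt_lim f t 0) ->
  forall s t, a < s < c -> a < t < c -> f s = f t.
Proof.
  intros Hd.
  assert (H : forall s t, a < s -> s <= t -> t < c -> f t = f s).
  { intros s t Hs Hst Ht. apply Rle_antisym.
    - apply (mono_int f (fun _ => 0) a c); auto; intros; lra.
    - assert (forall t, a < t < c -> derivable_pt_lim (fun x => - f x) t (- 0)).
      { intros; apply derivable_pt_lim_opp; auto. }
      pose proof (mono_int (fun x => - f x) (fun _ => -0) a c H (fun _ _ => ltac:(lra)) s t Hs Hst Ht). simpl in H0. lra. }
  intros s t Hs Ht. destruct (Rle_dec s t).
  - symmetry; apply H; lra.
  - apply H; lra.
Qed.

Lemma first_hit (f : R -> R) t :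
  0 <= t -> right_cont0 f -> 0 < f 0 -> (forall x, 0 < x <= t -> ct f x) -> f t <= 0 ->
  exists tau, 0 < tau <= t /\ (forall y, 0 <= y < tau -> 0 < f y) /\ f tau <= 0.
Proof.
  intros Ht0 Hr H0 Hc Ht.
  destruct (Hr (f 0) H0) as [d [Hd Hd1]].
  assert (Hpos : forall y, 0 <= y < d -> 0 < f y).
  { intros y Hy. specialize (Hd1 y Hy). apply Rabs_lt_between in Hd1. lra. }
  assert (Htd : d <= t).
  { destruct (Rle_dec d t); auto.
    specialize (Hpos t ltac:(lra)). lra. }
  set (E := fun x => 0 <= x <= t /\ forall y, 0 <= y <= x -> 0 < f y).
  assert (HB : bound E). { exists t. intros x [Hx _]. lra. }
  assert (HE : exists x, E x). { exists 0. split; [lra|]. intros y Hy. replace y with 0 by lra. auto. }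
  destruct (completeness E HB HE) as [s [Hub Hlub]].
  assert (Hs1 : d/2 <= s).
  { apply Hub. split; [lra|]. intros y Hy. apply Hpos. lra. }
  assert (Hs2 : s <= t). { apply Hlub. intros x [Hx _]. lra. }
  assert (Hbel : forall y, 0 <= y < s -> 0 < f y).
  { intros y Hy. apply NNPP; intros Hn.
    assert (s <= y). { apply Hlub. intros x [Hx1 Hx2]. destruct (Rle_dec x y); auto.
      exfalso; apply Hn, Hx2; lra. }
    lra. }
  exists s. split; [lra|]. split; [exact Hbel|].
  destruct (Rle_dec (f s) 0) as [|Hgt]; [auto|exfalso].
  apply Rnot_le_lt in Hgt.
  destruct (Rle_lt_or_eq_dec s t Hs2) as [Hlt|Heq]; [|subst; lra].
  destruct (Hc s ltac:(lra) (f s) Hgt) as [e [He He1]].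
  set (x := Rmin (s + e/2) t).
  assert (s < x) by (apply Rmin_glb_lt; lra).
  assert (x <= s + e/2) by apply Rmin_l. assert (x <= t) by apply Rmin_r.
  assert (HEx : E x).
  { split; [lra|]. intros y Hy. destruct (Rlt_dec y s); [apply Hbel; lra|].
    specialize (He1 y ltac:(rewrite Rabs_right; lra)). apply Rabs_lt_between in He1. lra. }
  specialize (Hub x HEx). lra.
Qed.

Lemma ct_left_le (f : R -> R) tau B :
  ct f tau -> 0 < tau -> (forall y, 0 < y < tau -> f y <= B) -> f tau <= B.
Proof.
  intros Hc Ht Hb. destruct (Rle_dec (f tau) B) as [|Hn]; auto. exfalso.
  destruct (Hc (f tau - B) ltac:(lra)) as [d [Hd H1]].
  set (y := Rmax (tau/2) (tau - d/2)).
  assert (tau/2 <= y) by apply Rmax_l. assert (tau - d/2 <= y) by apply Rmax_r.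
  assert (y < tau) by (apply Rmax_lub_lt; lra).
  specialize (H1 y ltac:(rewrite Rabs_left; lra)). specialize (Hb y ltac:(lra)).
  apply Rabs_lt_between in H1. lra.
Qed.

Lemma ct_minus f g x : ct f x -> ct g x -> ct (fun y => f y - g y) x.
Proof. intros Hf Hg. apply continuous_ct. apply (continuous_minus f g x); apply ct_continuous; auto. Qed.
Lemma ct_plus f g x : ct f x -> ct g x -> ct (fun y => f y + g y) x.
Proof. intros Hf Hg. apply continuous_ct. apply (continuous_plus f g x); apply ct_continuous; auto. Qed.
Lemma ct_mult f g x : ct f x -> ct g x -> ct (fun y => f y * g y) x.
Proof. intros Hf Hg. apply continuous_ct. apply (continuous_mult f g x); apply ct_continuous; auto. Qed.
Lemma ct_abs f x : ct f x -> ct (fun y => Rabs (f y)) x.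
Proof. intros Hf. apply continuous_ct. apply (continuous_Rabs_comp f x); apply ct_continuous; auto. Qed.
Lemma ct_const c x : ct (fun _ => c) x.
Proof. intros e He; exists 1; split; [lra|]; intros; rewrite Rminus_eq_0, Rabs_R0; lra. Qed.
Lemma ct_comp u h x : ct u x -> ct h (u x) -> ct (fun y => h (u y)) x.
Proof.
  intros Hu Hh eps He. destruct (Hh eps He) as [d [Hd H1]].
  destruct (Hu d Hd) as [d' [Hd' H2]]. exists d'; split; auto.
Qed.
Lemma ct_lip (u : R -> R) K x : 0 <= K -> (forall y z, Rabs (u y - u z) <= K * Rabs (y - z)) -> ct u x.
Proof.
  intros HK H eps He. exists (eps / (K + 1)). split. { apply Rdiv_lt_0_compat; lra. }
  intros y Hy. eapply Rle_lt_trans; [apply H|].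
  apply Rle_lt_trans with ((K+1) * Rabs (y - x)). { pose proof (Rabs_pos (y-x)); nra. }
  apply Rmult_lt_reg_l with (/ (K+1)). { apply Rinv_0_lt_compat; lra. }
  rewrite <- Rmult_assoc, Rinv_l by lra. unfold Rdiv in Hy. lra.
Qed.

Lemma ex_RInt_ct g a b : (forall x, ct g x) -> ex_RInt g a b.
Proof. intros H. apply (ex_RInt_continuous (V:=R_CompleteNormedModule)). intros; apply ct_continuous, H. Qed.

Lemma addK (x y : R) : x + y - x = y. Proof. ring. Qed.

Lemma RInt_lip (g : R -> R) B a b : (forall x, ct g x) -> (forall x, Rabs (g x) <= B) ->
  Rabs (RInt g 0 a - RInt g 0 b) <= B * Rabs (a - b).
Proof.
  intros Hc HB.
  assert (E : RInt g 0 a = RInt g 0 b + RInt g b a).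
  { pose proof (RInt_Chasles g 0 b a (ex_RInt_ct g 0 b Hc) (ex_RInt_ct g b a Hc)) as E.
    symmetry. exact E. }
  rewrite E, addK.
  destruct (Rle_dec b a).
  - rewrite (Rabs_right (a - b)) by lra. rewrite Rmult_comm.
    apply abs_RInt_le_const; auto. apply ex_RInt_ct; auto.
  - rewrite <- (opp_RInt_swap g a b) by (apply ex_RInt_ct; auto).
    change (opp (RInt g a b)) with (- RInt g a b). rewrite Rabs_Ropp.
    rewrite (Rabs_left (a - b)) by lra. replace (- (a - b)) with (b - a) by ring. rewrite Rmult_comm.
    apply abs_RInt_le_const; [lra| |auto]. apply ex_RInt_ct; auto.
Qed.

Lemma le_geom x c D : (forall n, x <= c + D * (/2) ^ n) -> x <= c.
Proof.
  intros H. destruct (Rle_dec x c) as [|Hn]; auto. exfalso.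
  assert (HD : 0 < D).
  { specialize (H 0%nat). simpl in H. lra. }
  destruct (pow_lt_1_zero (/2) ltac:(rewrite Rabs_right; lra) ((x - c) / D)) as [N HN].
  { apply Rdiv_lt_0_compat; lra. }
  specialize (HN N (le_n _)). specialize (H N).
  rewrite Rabs_right in HN by (apply Rle_ge, pow_le; lra).
  apply (Rmult_lt_compat_l D) in HN; auto.
  replace (D * ((x - c) / D)) with (x - c) in HN by (field; lra). lra.
Qed.

Lemma telescope (a : nat -> R) W : (forall k, Rabs (a (S k) - a k) <= W * (/2)^k) ->
  forall n j, Rabs (a (n + j)%nat - a n) <= 2 * W * (/2)^n * (1 - (/2)^j).
Proof.
  intros H n j. induction j.
  - rewrite Nat.add_0_r, Rminus_eq_0, Rabs_R0. simpl. lra.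
  - replace (n + S j)%nat with (S (n + j)) by lia.
    replace (a (S (n + j)) - a n) with ((a (S (n+j)) - a (n+j)%nat) + (a (n+j)%nat - a n)) by ring.
    eapply Rle_trans; [apply Rabs_triang|]. specialize (H (n+j)%nat).
    rewrite pow_add in H. simpl. lra.
Qed.

Lemma le_ge_dec_nat (n m : nat) : {(n <= m)%nat} + {(m <= n)%nat}.
Proof. destruct (Compare_dec.le_lt_dec n m); [left|right]; lia. Qed.

Lemma geom_lim (a : nat -> R) W : 0 <= W -> (forall k, Rabs (a (S k) - a k) <= W * (/2)^k) ->
  is_lim_seq a (Lim_seq a) /\ forall n, Rabs (real (Lim_seq a) - a n) <= 2 * W * (/2)^n.
Proof.
  intros HW H.
  assert (Hb : forall n m, (n <= m)%nat -> Rabs (a m - a n) <= 2 * W * (/2)^n).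
  { intros n m Hnm. replace m with (n + (m - n))%nat by lia.
    eapply Rle_trans; [apply telescope; auto|].
    assert (0 <= (/2)^(m-n)) by (apply pow_le; lra).
    assert (0 <= (/2)^n) by (apply pow_le; lra).
    assert (0 <= W * (/2)^n) by (apply Rmult_le_pos; lra).
    assert (0 <= W * (/2)^n * (/2)^(m-n)) by (apply Rmult_le_pos; lra). nra. }
  assert (Hc : Cauchy_crit a).
  { intros eps He. destruct (Req_dec W 0) as [HW0|HW0].
    - exists 0%nat. intros n m Hn Hm. unfold R_dist.
      destruct (le_ge_dec_nat n m) as [Hl|Hl].
      + specialize (Hb n m Hl). rewrite HW0 in Hb. rewrite <- Rabs_Ropp. replace (- (a n - a m)) with (a m - a n) by ring. lra.
      + specialize (Hb m n Hl). rewrite HW0 in Hb. lra.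
    - destruct (pow_lt_1_zero (/2) ltac:(rewrite Rabs_right; lra) (eps / (2 * W))) as [N HN].
      { apply Rdiv_lt_0_compat; lra. }
      exists N. intros n m Hn Hm. unfold R_dist.
      assert (forall k, (k >= N)%nat -> 2 * W * (/2)^k < eps).
      { intros k Hk. specialize (HN k Hk). rewrite Rabs_right in HN by (apply Rle_ge, pow_le; lra).
        apply (Rmult_lt_compat_l (2*W)) in HN; [|lra].
        replace (2 * W * (eps / (2 * W))) with eps in HN by (field; lra). lra. }
      destruct (le_ge_dec_nat n m) as [Hl|Hl].
      + specialize (Hb n m Hl). specialize (H0 n Hn). rewrite <- Rabs_Ropp. replace (- (a n - a m)) with (a m - a n) by ring. lra.
      + specialize (Hb m n Hl). specialize (H0 m Hm). lra. }
  destruct (Rcomplete.R_complete a Hc) as [l Hl].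
  pose proof (proj2 (is_lim_seq_Reals a l) Hl) as Hl'. pose proof (is_lim_seq_unique _ _ Hl') as HL.
  rewrite HL. split; [auto|]. simpl. intros n.
  destruct (Rle_dec (Rabs (l - a n)) (2 * W * (/2)^n)) as [|Hn]; auto. exfalso.
  destruct (Hl (Rabs (l - a n) - 2 * W * (/2)^n) ltac:(lra)) as [N HN].
  specialize (HN (max N n) ltac:(lia)). specialize (Hb n (max N n) ltac:(lia)).
  unfold R_dist in HN.
  assert (Rabs (l - a n) <= Rabs (a (max N n) - a n) + Rabs (a (max N n) - l)).
  { replace (l - a n) with ((a (max N n) - a n) + - (a (max N n) - l)) by ring.
    rewrite <- (Rabs_Ropp (a (max N n) - l)). apply Rabs_triang. }
  lra.
Qed.

Lemma exp_mono x y : x <= y -> exp x <= exp y.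
Proof. intros H. destruct (Rle_lt_or_eq_dec _ _ H). left; apply exp_increasing; auto. subst; lra. Qed.

Lemma dpl_ext_loc (f g : R -> R) x l :
  (exists d, 0 < d /\ forall s, Rabs (s - x) < d -> f s = g s) ->
  derivable_pt_lim f x l -> derivable_pt_lim g x l.
Proof.
  intros [d [Hd He]] Hf eps Heps. destruct (Hf eps Heps) as [dl Hdl].
  assert (Hp : 0 < Rmin dl d) by (apply Rmin_pos; [apply cond_pos| lra]).
  exists (mkposreal _ Hp). intros h Hh Hh2. simpl in Hh2.
  assert (Rabs h < dl) by (pose proof (Rmin_l dl d); lra).
  assert (Rabs h < d) by (pose proof (Rmin_r dl d); lra).
  rewrite <- (He (x + h)) by (replace (x + h - x) with h by ring; lra).
  rewrite <- (He x) by (rewrite Rminus_eq_0, Rabs_R0; lra).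
  apply Hdl; auto.
Qed.

Lemma dpl_plus_const (f : R -> R) c x l : derivable_pt_lim f x l -> derivable_pt_lim (fun s => c + f s) x l.
Proof.
  intros Hf eps He. destruct (Hf eps He) as [d Hd]. exists d. intros h H1 H2.
  replace ((c + f (x + h) - (c + f x)) / h) with ((f (x + h) - f x) / h) by (field; auto).
  apply Hd; auto.
Qed.

Lemma Rmax_lip t s : Rabs (Rmax 0 t - Rmax 0 s) <= Rabs (t - s).
Proof. unfold Rmax; destruct (Rle_dec 0 t); destruct (Rle_dec 0 s); unfold Rabs; repeat destruct Rcase_abs; lra. Qed.

Definition lipB (f : R -> R -> R) L B :=
  (forall a b c d, Rabs (f a b - f c d) <= L * (Rabs (a - c) + Rabs (b - d))) /\
  (forall a b, Rabs (f a b) <= B).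

Lemma ct_comp2 f L B u v x : lipB f L B -> 0 <= L -> ct u x -> ct v x -> ct (fun s => f (u s) (v s)) x.
Proof.
  intros [Hl _] HL Hu Hv eps He.
  destruct (Hu (eps / (2 * (L + 1))) ltac:(apply Rdiv_lt_0_compat; lra)) as [d1 [Hd1 H1]].
  destruct (Hv (eps / (2 * (L + 1))) ltac:(apply Rdiv_lt_0_compat; lra)) as [d2 [Hd2 H2]].
  exists (Rmin d1 d2). split; [apply Rmin_pos; lra|]. intros y Hy.
  specialize (H1 y ltac:(pose proof (Rmin_l d1 d2); lra)).
  specialize (H2 y ltac:(pose proof (Rmin_r d1 d2); lra)).
  eapply Rle_lt_trans; [apply Hl|].
  pose proof (Rabs_pos (u y - u x)); pose proof (Rabs_pos (v y - v x)).
  apply Rle_lt_trans with ((L+1) * (Rabs (u y - u x) + Rabs (v y - v x))). nra.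
  apply Rlt_le_trans with ((L + 1) * (eps / (2 * (L + 1)) + eps / (2 * (L + 1)))).
  apply Rmult_lt_compat_l; lra. right; field; lra.
Qed.

Fixpoint pic (f1 f2 : R -> R -> R) (x1 x2 : R) (n : nat) (t : R) : R * R :=
  match n with
  | O => (x1, x2)
  | S n => (x1 + RInt (fun s => f1 (fst (pic f1 f2 x1 x2 n s)) (snd (pic f1 f2 x1 x2 n s))) 0 (Rmax 0 t),
            x2 + RInt (fun s => f2 (fst (pic f1 f2 x1 x2 n s)) (snd (pic f1 f2 x1 x2 n s))) 0 (Rmax 0 t))
  end.

Lemma pic_fst f1 f2 x1 x2 n t : fst (pic f1 f2 x1 x2 (S n) t) =
  x1 + RInt (fun s => f1 (fst (pic f1 f2 x1 x2 n s)) (snd (pic f1 f2 x1 x2 n s))) 0 (Rmax 0 t).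
Proof. reflexivity. Qed.
Lemma pic_snd f1 f2 x1 x2 n t : snd (pic f1 f2 x1 x2 (S n) t) =
  x2 + RInt (fun s => f2 (fst (pic f1 f2 x1 x2 n s)) (snd (pic f1 f2 x1 x2 n s))) 0 (Rmax 0 t).
Proof. reflexivity. Qed.

Lemma pic_max f1 f2 x1 x2 n t : pic f1 f2 x1 x2 n t = pic f1 f2 x1 x2 n (Rmax 0 t).
Proof.
  destruct n; simpl; auto.
  assert (E : Rmax 0 (Rmax 0 t) = Rmax 0 t) by (unfold Rmax; repeat destruct Rle_dec; lra).
  rewrite E. reflexivity.
Qed.

Lemma int_exp C a t : 0 < a -> RInt (fun s => C * exp (a * s)) 0 t = C * (exp (a * t) - 1) / a.
Proof.
  intros Ha. apply is_RInt_unique.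
  assert (E : C * (exp (a * t) - 1) / a = minus (C * exp (a * t) / a) (C * exp (a * 0) / a)).
  { rewrite Rmult_0_r, exp_0. unfold minus, plus, opp; simpl. field. lra. }
  rewrite E. apply (is_RInt_derive (fun s => C * exp (a * s) / a)).
  - intros x _. auto_derive; auto. field. lra.
  - intros x _. apply ct_continuous. apply ct_mult. apply ct_const.
    apply (derivable_ct _ _ (exp (a * x) * (a * 1))). apply derivable_pt_lim_comp.
    + apply derivable_pt_lim_scal, derivable_pt_lim_id.
    + apply derivable_pt_lim_exp.
Qed.

Lemma lipB_B f L B : lipB f L B -> 0 <= B.
Proof. intros [_ H]. pose proof (H 0 0). pose proof (Rabs_pos (f 0 0)). lra. Qed.

Lemma pic_lip f1 f2 x1 x2 L B : lipB f1 L B -> lipB f2 L B -> 0 <= L ->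
  forall n t s, Rabs (fst (pic f1 f2 x1 x2 n t) - fst (pic f1 f2 x1 x2 n s)) <= B * Rabs (t - s) /\
                Rabs (snd (pic f1 f2 x1 x2 n t) - snd (pic f1 f2 x1 x2 n s)) <= B * Rabs (t - s).
Proof.
  intros H1 H2 HL. pose proof (lipB_B _ _ _ H1) as HB.
  assert (HBt : forall t s, 0 <= B * Rabs (t - s)) by (intros; apply Rmult_le_pos; auto; apply Rabs_pos).
  induction n; intros t s.
  - simpl. rewrite !Rminus_eq_0, !Rabs_R0. split; apply HBt.
  - assert (Hc1 : forall x, ct (fun s => fst (pic f1 f2 x1 x2 n s)) x).
    { intros x. apply (ct_lip _ B); auto. intros; apply IHn. }
    assert (Hc2 : forall x, ct (fun s => snd (pic f1 f2 x1 x2 n s)) x).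
    { intros x. apply (ct_lip _ B); auto. intros; apply IHn. }
    simpl. split.
    + replace (x1 + RInt (fun s0 => f1 (fst (pic f1 f2 x1 x2 n s0)) (snd (pic f1 f2 x1 x2 n s0))) 0 (Rmax 0 t) -
        (x1 + RInt (fun s0 => f1 (fst (pic f1 f2 x1 x2 n s0)) (snd (pic f1 f2 x1 x2 n s0))) 0 (Rmax 0 s)))
      with (RInt (fun s0 => f1 (fst (pic f1 f2 x1 x2 n s0)) (snd (pic f1 f2 x1 x2 n s0))) 0 (Rmax 0 t) -
        RInt (fun s0 => f1 (fst (pic f1 f2 x1 x2 n s0)) (snd (pic f1 f2 x1 x2 n s0))) 0 (Rmax 0 s)) by ring.
      eapply Rle_trans; [apply RInt_lip|].
      * intros x; apply (ct_comp2 f1 L B); auto.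
      * intros; apply (proj2 H1).
      * apply Rmult_le_compat_l; auto. apply Rmax_lip.
    + replace (x2 + RInt (fun s0 => f2 (fst (pic f1 f2 x1 x2 n s0)) (snd (pic f1 f2 x1 x2 n s0))) 0 (Rmax 0 t) -
        (x2 + RInt (fun s0 => f2 (fst (pic f1 f2 x1 x2 n s0)) (snd (pic f1 f2 x1 x2 n s0))) 0 (Rmax 0 s)))
      with (RInt (fun s0 => f2 (fst (pic f1 f2 x1 x2 n s0)) (snd (pic f1 f2 x1 x2 n s0))) 0 (Rmax 0 t) -
        RInt (fun s0 => f2 (fst (pic f1 f2 x1 x2 n s0)) (snd (pic f1 f2 x1 x2 n s0))) 0 (Rmax 0 s)) by ring.
      eapply Rle_trans; [apply RInt_lip|].
      * intros x; apply (ct_comp2 f2 L B); auto.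
      * intros; apply (proj2 H2).
      * apply Rmult_le_compat_l; auto. apply Rmax_lip.
Qed.

Lemma RInt_minus_R (h1 h2 : R -> R) a b : (forall x, ct h1 x) -> (forall x, ct h2 x) ->
  RInt h1 a b - RInt h2 a b = RInt (fun s => h1 s - h2 s) a b.
Proof.
  intros H1 H2. symmetry. apply (RInt_minus (V:=R_CompleteNormedModule)); apply ex_RInt_ct; auto.
Qed.

Lemma int_diff_bound (h1 h2 M : R -> R) t : 0 <= t -> (forall x, ct h1 x) -> (forall x, ct h2 x) ->
  (forall x, ct M x) -> (forall s, 0 <= s <= t -> Rabs (h1 s - h2 s) <= M s) ->
  Rabs (RInt h1 0 t - RInt h2 0 t) <= RInt M 0 t.
Proof.
  intros Ht H1 H2 HM Hb. rewrite RInt_minus_R by auto.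
  eapply Rle_trans; [apply abs_RInt_le; auto|].
  - apply ex_RInt_ct; intros; apply ct_minus; auto.
  - apply RInt_le; auto.
    + apply ex_RInt_ct; intros; apply ct_abs, ct_minus; auto.
    + apply ex_RInt_ct; auto.
    + intros; apply Hb; lra.
Qed.

Lemma int_diff_const (h1 h2 : R -> R) t M : 0 <= t -> (forall x, ct h1 x) -> (forall x, ct h2 x) ->
  (forall s, 0 <= s <= t -> Rabs (h1 s - h2 s) <= M) ->
  Rabs (RInt h1 0 t - RInt h2 0 t) <= t * M.
Proof.
  intros Ht H1 H2 Hb. rewrite RInt_minus_R by auto.
  replace t with (t - 0) at 2 by ring.
  apply abs_RInt_le_const; auto. apply ex_RInt_ct; intros; apply ct_minus; auto.
Qed.

Lemma RInt_const_R (c a b : R) : RInt (fun _ => c) a b = (b - a) * c.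
Proof. rewrite RInt_const. reflexivity. Qed.

Definition picD f1 f2 x1 x2 n t :=
  Rabs (fst (pic f1 f2 x1 x2 (S n) t) - fst (pic f1 f2 x1 x2 n t)) +
  Rabs (snd (pic f1 f2 x1 x2 (S n) t) - snd (pic f1 f2 x1 x2 n t)).

Lemma pic_ctn f1 f2 x1 x2 L B : lipB f1 L B -> lipB f2 L B -> 0 <= L -> forall n x,
  ct (fun s => fst (pic f1 f2 x1 x2 n s)) x /\ ct (fun s => snd (pic f1 f2 x1 x2 n s)) x.
Proof.
  intros H1 H2 HL n x. pose proof (lipB_B _ _ _ H1).
  split; apply (ct_lip _ B); auto; intros; apply (pic_lip f1 f2 x1 x2 L B); auto.
Qed.

Lemma picD_bound f1 f2 x1 x2 L B : lipB f1 L B -> lipB f2 L B -> 0 < L ->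
  forall n t, picD f1 f2 x1 x2 n t <= (B / (2 * L)) * (/2)^n * exp (4 * L * Rmax 0 t).
Proof.
  intros H1 H2 HL. pose proof (lipB_B _ _ _ H1) as HB.
  assert (Hc : forall n x, ct (fun s => fst (pic f1 f2 x1 x2 n s)) x /\ ct (fun s => snd (pic f1 f2 x1 x2 n s)) x)
    by (apply (pic_ctn f1 f2 x1 x2 L B); auto; lra).
  assert (Hg1 : forall n x, ct (fun s => f1 (fst (pic f1 f2 x1 x2 n s)) (snd (pic f1 f2 x1 x2 n s))) x)
    by (intros; apply (ct_comp2 f1 L B); try lra; auto; apply Hc).
  assert (Hg2 : forall n x, ct (fun s => f2 (fst (pic f1 f2 x1 x2 n s)) (snd (pic f1 f2 x1 x2 n s))) x)
    by (intros; apply (ct_comp2 f2 L B); try lra; auto; apply Hc).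
  assert (Hred : forall n t, picD f1 f2 x1 x2 n t = picD f1 f2 x1 x2 n (Rmax 0 t)).
  { intros n t. unfold picD. rewrite (pic_max _ _ _ _ (S n) t), (pic_max _ _ _ _ n t). reflexivity. }
  assert (Hm : forall t, 0 <= Rmax 0 t) by (intros; apply Rmax_l).
  assert (Hmm : forall t, Rmax 0 (Rmax 0 t) = Rmax 0 t) by (intros; unfold Rmax; repeat destruct Rle_dec; lra).
  intros n. induction n; intros t; rewrite Hred; set (u := Rmax 0 t); assert (Hu : 0 <= u) by apply Hm.
  - unfold picD. simpl. rewrite (Rmax_right 0 u) by lra.
    rewrite !RInt_const_R.
    replace (x1 + (u - 0) * f1 x1 x2 - x1) with (u * f1 x1 x2) by ring.
    replace (x2 + (u - 0) * f2 x1 x2 - x2) with (u * f2 x1 x2) by ring.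
    rewrite !Rabs_mult, (Rabs_right u) by lra.
    assert (Rabs (f1 x1 x2) <= B) by apply (proj2 H1).
    assert (Rabs (f2 x1 x2) <= B) by apply (proj2 H2).
    assert (u * B + u * B <= B / (2 * L) * exp (4 * L * u)).
    { pose proof (exp_ineq1_le (4 * L * u)).
      apply Rle_trans with (B / (2 * L) * (4 * L * u)).
      - right. field. lra.
      - apply Rmult_le_compat_l. apply Rdiv_le_0_compat; lra. lra. }
    simpl. nra.
  - unfold picD. rewrite (pic_fst _ _ _ _ (S n) u), (pic_fst _ _ _ _ n u), (pic_snd _ _ _ _ (S n) u), (pic_snd _ _ _ _ n u).
    rewrite (Rmax_right 0 u) by lra.
    set (C := B / (2 * L) * (/ 2) ^ n).
    assert (HC : 0 <= C) by (unfold C; apply Rmult_le_pos; [apply Rdiv_le_0_compat; lra| apply pow_le; lra]).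
    assert (Hpt : forall s, 0 <= s <= u -> picD f1 f2 x1 x2 n s <= C * exp (4 * L * s)).
    { intros s Hs. specialize (IHn s). rewrite (Rmax_right 0 s) in IHn by lra. exact IHn. }
    assert (HI : RInt (fun s => L * C * exp (4 * L * s)) 0 u = L * C * (exp (4 * L * u) - 1) / (4 * L))
      by (apply int_exp; lra).
    assert (Hcexp : forall x, ct (fun s => L * C * exp (4 * L * s)) x).
    { intros x. apply ct_mult. apply ct_const.
      apply (derivable_ct _ _ (exp (4 * L * x) * (4 * L * 1))). apply derivable_pt_lim_comp.
      + apply derivable_pt_lim_scal, derivable_pt_lim_id.
      + apply derivable_pt_lim_exp. }
    assert (A1 := int_diff_bound _ _ _ u Hu (Hg1 (S n)) (Hg1 n) Hcexp).
    assert (A2 := int_diff_bound _ _ _ u Hu (Hg2 (S n)) (Hg2 n) Hcexp).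
    rewrite HI in A1, A2.
    assert (Hpb : forall s, 0 <= s <= u ->
      L * (Rabs (fst (pic f1 f2 x1 x2 (S n) s) - fst (pic f1 f2 x1 x2 n s)) +
           Rabs (snd (pic f1 f2 x1 x2 (S n) s) - snd (pic f1 f2 x1 x2 n s))) <= L * C * exp (4 * L * s)).
    { intros s Hs. rewrite Rmult_assoc. apply Rmult_le_compat_l; [lra|]. apply Hpt; auto. }
    specialize (A1 ltac:(intros s Hs; eapply Rle_trans; [apply (proj1 H1)| apply Hpb; auto])).
    specialize (A2 ltac:(intros s Hs; eapply Rle_trans; [apply (proj1 H2)| apply Hpb; auto])).
    replace (x1 + RInt (fun s => f1 (fst (pic f1 f2 x1 x2 (S n) s)) (snd (pic f1 f2 x1 x2 (S n) s))) 0 u -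
      (x1 + RInt (fun s => f1 (fst (pic f1 f2 x1 x2 n s)) (snd (pic f1 f2 x1 x2 n s))) 0 u))
      with (RInt (fun s => f1 (fst (pic f1 f2 x1 x2 (S n) s)) (snd (pic f1 f2 x1 x2 (S n) s))) 0 u -
        RInt (fun s => f1 (fst (pic f1 f2 x1 x2 n s)) (snd (pic f1 f2 x1 x2 n s))) 0 u) by ring.
    replace (x2 + RInt (fun s => f2 (fst (pic f1 f2 x1 x2 (S n) s)) (snd (pic f1 f2 x1 x2 (S n) s))) 0 u -
      (x2 + RInt (fun s => f2 (fst (pic f1 f2 x1 x2 n s)) (snd (pic f1 f2 x1 x2 n s))) 0 u))
      with (RInt (fun s => f2 (fst (pic f1 f2 x1 x2 (S n) s)) (snd (pic f1 f2 x1 x2 (S n) s))) 0 u -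
        RInt (fun s => f2 (fst (pic f1 f2 x1 x2 n s)) (snd (pic f1 f2 x1 x2 n s))) 0 u) by ring.
    assert (L * C * (exp (4 * L * u) - 1) / (4 * L) + L * C * (exp (4 * L * u) - 1) / (4 * L)
      <= B / (2 * L) * (/ 2) ^ S n * exp (4 * L * u)).
    { replace (B / (2 * L) * (/ 2) ^ S n) with (C / 2) by (unfold C; simpl; field; lra).
      replace (L * C * (exp (4 * L * u) - 1) / (4 * L) + L * C * (exp (4 * L * u) - 1) / (4 * L))
        with (C / 2 * exp (4 * L * u) - C / 2) by (field; lra). lra. }
    lra.
Qed.

Definition ysol1 f1 f2 x1 x2 t := real (Lim_seq (fun n => fst (pic f1 f2 x1 x2 n t))).
Definition ysol2 f1 f2 x1 x2 t := real (Lim_seq (fun n => snd (pic f1 f2 x1 x2 n t))).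

Lemma ysol_approx f1 f2 x1 x2 L B : lipB f1 L B -> lipB f2 L B -> 0 < L -> forall n t,
  Rabs (ysol1 f1 f2 x1 x2 t - fst (pic f1 f2 x1 x2 n t)) <= 2 * ((B / (2 * L)) * exp (4 * L * Rmax 0 t)) * (/2)^n /\
  Rabs (ysol2 f1 f2 x1 x2 t - snd (pic f1 f2 x1 x2 n t)) <= 2 * ((B / (2 * L)) * exp (4 * L * Rmax 0 t)) * (/2)^n.
Proof.
  intros H1 H2 HL n t. pose proof (lipB_B _ _ _ H1) as HB.
  set (W := B / (2 * L) * exp (4 * L * Rmax 0 t)).
  assert (HW : 0 <= W) by (unfold W; apply Rmult_le_pos; [apply Rdiv_le_0_compat; lra| left; apply exp_pos]).
  pose proof (picD_bound f1 f2 x1 x2 L B H1 H2 HL) as Hb.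
  assert (Hk : forall k, picD f1 f2 x1 x2 k t <= W * (/2)^k).
  { intros k. specialize (Hb k t). unfold W. lra. }
  split.
  - apply (geom_lim (fun n => fst (pic f1 f2 x1 x2 n t)) W HW).
    intros k. specialize (Hk k). unfold picD in Hk. pose proof (Rabs_pos (snd (pic f1 f2 x1 x2 (S k) t) - snd (pic f1 f2 x1 x2 k t))). lra.
  - apply (geom_lim (fun n => snd (pic f1 f2 x1 x2 n t)) W HW).
    intros k. specialize (Hk k). unfold picD in Hk. pose proof (Rabs_pos (fst (pic f1 f2 x1 x2 (S k) t) - fst (pic f1 f2 x1 x2 k t))). lra.
Qed.

Lemma ysol_lip f1 f2 x1 x2 L B : lipB f1 L B -> lipB f2 L B -> 0 < L -> forall t s,
  Rabs (ysol1 f1 f2 x1 x2 t - ysol1 f1 f2 x1 x2 s) <= B * Rabs (t - s) /\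
  Rabs (ysol2 f1 f2 x1 x2 t - ysol2 f1 f2 x1 x2 s) <= B * Rabs (t - s).
Proof.
  intros H1 H2 HL t s.
  pose proof (ysol_approx f1 f2 x1 x2 L B H1 H2 HL) as Ha.
  pose proof (pic_lip f1 f2 x1 x2 L B H1 H2 ltac:(lra)) as Hp.
  set (Wt := 2 * (B / (2 * L) * exp (4 * L * Rmax 0 t))).
  set (Ws := 2 * (B / (2 * L) * exp (4 * L * Rmax 0 s))).
  split; apply (le_geom _ _ (Wt + Ws)); intros n;
    destruct (Ha n t) as [At1 At2]; destruct (Ha n s) as [As1 As2]; destruct (Hp n t s) as [P1 P2];
    fold Wt in At1, At2; fold Ws in As1, As2.
  - replace (ysol1 f1 f2 x1 x2 t - ysol1 f1 f2 x1 x2 s) with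
      ((ysol1 f1 f2 x1 x2 t - fst (pic f1 f2 x1 x2 n t)) + (fst (pic f1 f2 x1 x2 n t) - fst (pic f1 f2 x1 x2 n s))
       - (ysol1 f1 f2 x1 x2 s - fst (pic f1 f2 x1 x2 n s))) by ring.
    unfold Rminus at 1. eapply Rle_trans; [apply Rabs_triang|]. rewrite Rabs_Ropp.
    eapply Rle_trans; [apply Rplus_le_compat_r, Rabs_triang|]. lra.
  - replace (ysol2 f1 f2 x1 x2 t - ysol2 f1 f2 x1 x2 s) with
      ((ysol2 f1 f2 x1 x2 t - snd (pic f1 f2 x1 x2 n t)) + (snd (pic f1 f2 x1 x2 n t) - snd (pic f1 f2 x1 x2 n s))
       - (ysol2 f1 f2 x1 x2 s - snd (pic f1 f2 x1 x2 n s))) by ring.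
    unfold Rminus at 1. eapply Rle_trans; [apply Rabs_triang|]. rewrite Rabs_Ropp.
    eapply Rle_trans; [apply Rplus_le_compat_r, Rabs_triang|]. lra.
Qed.

Lemma ysol_ct f1 f2 x1 x2 L B : lipB f1 L B -> lipB f2 L B -> 0 < L -> forall x,
  ct (ysol1 f1 f2 x1 x2) x /\ ct (ysol2 f1 f2 x1 x2) x.
Proof.
  intros H1 H2 HL x. pose proof (lipB_B _ _ _ H1).
  split; apply (ct_lip _ B); auto; intros; apply (ysol_lip f1 f2 x1 x2 L B); auto.
Qed.

Lemma ysol_rep f1 f2 x1 x2 L B : lipB f1 L B -> lipB f2 L B -> 0 < L -> forall t, 0 <= t ->
  ysol1 f1 f2 x1 x2 t = x1 + RInt (fun s => f1 (ysol1 f1 f2 x1 x2 s) (ysol2 f1 f2 x1 x2 s)) 0 t /\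
  ysol2 f1 f2 x1 x2 t = x2 + RInt (fun s => f2 (ysol1 f1 f2 x1 x2 s) (ysol2 f1 f2 x1 x2 s)) 0 t.
Proof.
  intros H1 H2 HL t Ht. pose proof (lipB_B _ _ _ H1) as HB.
  pose proof (ysol_approx f1 f2 x1 x2 L B H1 H2 HL) as Ha.
  pose proof (ysol_ct f1 f2 x1 x2 L B H1 H2 HL) as Hy.
  pose proof (pic_ctn f1 f2 x1 x2 L B H1 H2 ltac:(lra)) as Hc.
  set (y1 := ysol1 f1 f2 x1 x2) in *. set (y2 := ysol2 f1 f2 x1 x2) in *.
  set (W := 2 * (B / (2 * L) * exp (4 * L * t))).
  assert (HW : forall s, 0 <= s <= t -> 2 * (B / (2 * L) * exp (4 * L * Rmax 0 s)) <= W).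
  { intros s Hs. rewrite Rmax_right by lra. unfold W. apply Rmult_le_compat_l; [lra|].
    apply Rmult_le_compat_l; [apply Rdiv_le_0_compat; lra|]. apply exp_mono. nra. }
  assert (HW0 : 0 <= W) by (unfold W; apply Rmult_le_pos; [lra| apply Rmult_le_pos; [apply Rdiv_le_0_compat; lra| left; apply exp_pos]]).
  assert (HG1 : forall x, ct (fun s => f1 (y1 s) (y2 s)) x) by (intros; apply (ct_comp2 f1 L B); try lra; auto; apply Hy).
  assert (HG2 : forall x, ct (fun s => f2 (y1 s) (y2 s)) x) by (intros; apply (ct_comp2 f2 L B); try lra; auto; apply Hy).
  assert (Hg1 : forall n x, ct (fun s => f1 (fst (pic f1 f2 x1 x2 n s)) (snd (pic f1 f2 x1 x2 n s))) x)
    by (intros; apply (ct_comp2 f1 L B); try lra; auto; apply Hc).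
  assert (Hg2 : forall n x, ct (fun s => f2 (fst (pic f1 f2 x1 x2 n s)) (snd (pic f1 f2 x1 x2 n s))) x)
    by (intros; apply (ct_comp2 f2 L B); try lra; auto; apply Hc).
  assert (Hpt : forall n s, 0 <= s <= t -> Rabs (fst (pic f1 f2 x1 x2 n s) - y1 s) + Rabs (snd (pic f1 f2 x1 x2 n s) - y2 s) <= 2 * W * (/2)^n).
  { intros n s Hs. destruct (Ha n s) as [A1 A2]. specialize (HW s Hs).
    rewrite <- (Rabs_Ropp (fst _ - _)), <- (Rabs_Ropp (snd _ - _)).
    replace (- (fst (pic f1 f2 x1 x2 n s) - y1 s)) with (y1 s - fst (pic f1 f2 x1 x2 n s)) by ring.
    replace (- (snd (pic f1 f2 x1 x2 n s) - y2 s)) with (y2 s - snd (pic f1 f2 x1 x2 n s)) by ring.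
    assert (0 <= (/2)^n) by (apply pow_le; lra). nra. }
  split; apply Rminus_diag_uniq; apply Rabs_eq_0; apply Rle_antisym; [|apply Rabs_pos| |apply Rabs_pos];
    apply (le_geom _ 0 (W + t * L * (2 * W))); intros n.
  - destruct (Ha (S n) t) as [A1 _]. rewrite pic_fst, Rmax_right in A1 by lra.
    assert (Hi := int_diff_const _ _ t (L * (2 * W * (/2)^n)) Ht (Hg1 n) HG1).
    specialize (Hi ltac:(intros s Hs; eapply Rle_trans; [apply (proj1 H1)|]; apply Rmult_le_compat_l; [lra|]; apply Hpt; auto)).
    replace (y1 t - (x1 + RInt (fun s => f1 (y1 s) (y2 s)) 0 t)) with
      ((y1 t - (x1 + RInt (fun s => f1 (fst (pic f1 f2 x1 x2 n s)) (snd (pic f1 f2 x1 x2 n s))) 0 t))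
       + (RInt (fun s => f1 (fst (pic f1 f2 x1 x2 n s)) (snd (pic f1 f2 x1 x2 n s))) 0 t - RInt (fun s => f1 (y1 s) (y2 s)) 0 t)) by ring.
    eapply Rle_trans; [apply Rabs_triang|]. simpl pow in A1. fold W in A1.
    replace (t * (L * (2 * W * (/ 2) ^ n))) with (t * L * (2 * W) * (/2)^n) in Hi by ring.
    assert (0 <= W * (/2)^n) by (apply Rmult_le_pos; [lra|apply pow_le; lra]). lra.
  - destruct (Ha (S n) t) as [_ A1]. rewrite pic_snd, Rmax_right in A1 by lra.
    assert (Hi := int_diff_const _ _ t (L * (2 * W * (/2)^n)) Ht (Hg2 n) HG2).
    specialize (Hi ltac:(intros s Hs; eapply Rle_trans; [apply (proj1 H2)|]; apply Rmult_le_compat_l; [lra|]; apply Hpt; auto)).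
    replace (y2 t - (x2 + RInt (fun s => f2 (y1 s) (y2 s)) 0 t)) with
      ((y2 t - (x2 + RInt (fun s => f2 (fst (pic f1 f2 x1 x2 n s)) (snd (pic f1 f2 x1 x2 n s))) 0 t))
       + (RInt (fun s => f2 (fst (pic f1 f2 x1 x2 n s)) (snd (pic f1 f2 x1 x2 n s))) 0 t - RInt (fun s => f2 (y1 s) (y2 s)) 0 t)) by ring.
    eapply Rle_trans; [apply Rabs_triang|]. simpl pow in A1. fold W in A1.
    replace (t * (L * (2 * W * (/ 2) ^ n))) with (t * L * (2 * W) * (/2)^n) in Hi by ring.
    assert (0 <= W * (/2)^n) by (apply Rmult_le_pos; [lra|apply pow_le; lra]). lra.
Qed.

Lemma RInt_point_R (g : R -> R) a : RInt g a a = 0.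
Proof. rewrite RInt_point. reflexivity. Qed.

Lemma dpl_RInt (G : R -> R) t : (forall x, ct G x) -> derivable_pt_lim (fun s => RInt G 0 s) t (G t).
Proof.
  intros HG. apply is_derive_Reals.
  apply (is_derive_RInt (V:=R_CompleteNormedModule) G (fun s => RInt G 0 s) 0 t).
  - apply filter_forall. intros b. apply (RInt_correct (V:=R_CompleteNormedModule)). apply ex_RInt_ct; auto.
  - apply ct_continuous; auto.
Qed.

Theorem picard f1 f2 x1 x2 L B : lipB f1 L B -> lipB f2 L B -> 0 < L ->
  exists y1 y2 : R -> R, y1 0 = x1 /\ y2 0 = x2 /\ (forall x, ct y1 x /\ ct y2 x) /\
    forall t, 0 < t -> derivable_pt_lim y1 t (f1 (y1 t) (y2 t)) /\ derivable_pt_lim y2 t (f2 (y1 t) (y2 t)).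
Proof.
  intros H1 H2 HL.
  pose proof (ysol_rep f1 f2 x1 x2 L B H1 H2 HL) as Hr.
  pose proof (ysol_ct f1 f2 x1 x2 L B H1 H2 HL) as Hy.
  exists (ysol1 f1 f2 x1 x2), (ysol2 f1 f2 x1 x2).
  set (y1 := ysol1 f1 f2 x1 x2) in *. set (y2 := ysol2 f1 f2 x1 x2) in *.
  assert (HG1 : forall x, ct (fun s => f1 (y1 s) (y2 s)) x) by (intros; apply (ct_comp2 f1 L B); try lra; auto; apply Hy).
  assert (HG2 : forall x, ct (fun s => f2 (y1 s) (y2 s)) x) by (intros; apply (ct_comp2 f2 L B); try lra; auto; apply Hy).
  destruct (Hr 0 (Rle_refl 0)) as [E1 E2]. rewrite RInt_point_R, Rplus_0_r in E1, E2.
  split; [auto|]. split; [auto|]. split; [auto|].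
  intros t Ht. split.
  - apply (dpl_ext_loc (fun u => x1 + RInt (fun s => f1 (y1 s) (y2 s)) 0 u) y1 t).
    + exists t. split; auto. intros s Hs. symmetry. apply (Hr s). apply Rabs_lt_between in Hs. lra.
    + apply dpl_plus_const. apply (dpl_RInt (fun s => f1 (y1 s) (y2 s))); auto.
  - apply (dpl_ext_loc (fun u => x2 + RInt (fun s => f2 (y1 s) (y2 s)) 0 u) y2 t).
    + exists t. split; auto. intros s Hs. symmetry. apply (Hr s). apply Rabs_lt_between in Hs. lra.
    + apply dpl_plus_const. apply (dpl_RInt (fun s => f2 (y1 s) (y2 s))); auto.
Qed.

Ltac solve_ex := repeat match goal with
  | |- _ /\ _ => split
  | |- True => exact I
  | |- ex_derive _ _ => eexists; eassumption
  end.

Lemma dpl_of_is_derive f x l : is_derive f x l -> derivable_pt_lim f x l.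
Proof. apply is_derive_Reals. Qed.
Lemma is_derive_of_dpl f x l : derivable_pt_lim f x l -> is_derive f x l.
Proof. apply is_derive_Reals. Qed.

Lemma G1 (f df : R -> R) tau K :
  (forall t, 0 < t < tau -> derivable_pt_lim f t (df t)) ->
  (forall t, 0 < t < tau -> df t <= K * f t) -> right_cont0 f ->
  forall t, 0 < t < tau -> f t <= f 0 * exp (K * t).
Proof.
  intros Hd Hb Hr t Ht.
  set (h := fun s => f s * exp (- K * s)).
  assert (Hh : forall s, 0 < s < tau -> derivable_pt_lim h s (exp (- K * s) * (df s - K * f s))).
  { intros s Hs. apply dpl_of_is_derive. unfold h.
    assert (HH := is_derive_of_dpl _ _ _ (Hd s Hs)).
    auto_derive. { solve_ex. }
    replace (Derive (fun x => f x) s) with (df s) by (symmetry; apply is_derive_unique; auto). ring. }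
  assert (Hn : forall s, 0 < s < tau -> exp (- K * s) * (df s - K * f s) <= 0).
  { intros s Hs. specialize (Hb s Hs). pose proof (exp_pos (-K * s)). nra. }
  assert (Hrh : right_cont0 h).
  { unfold h. apply rc_mult; auto. apply ct_rc.
    apply (derivable_ct _ _ (exp (-K * 0) * (-K * 1))). apply derivable_pt_lim_comp.
    + apply derivable_pt_lim_scal, derivable_pt_lim_id.
    + apply derivable_pt_lim_exp. }
  pose proof (mono0 h _ tau Hh Hn Hrh t Ht) as Hm. unfold h in Hm.
  rewrite Rmult_0_r, exp_0, Rmult_1_r in Hm.
  apply Rmult_le_compat_r with (r := exp (K * t)) in Hm; [|left; apply exp_pos].
  rewrite Rmult_assoc, <- exp_plus in Hm. replace (- K * t + K * t) with 0 in Hm by ring.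
  rewrite exp_0, Rmult_1_r in Hm. exact Hm.
Qed.

Lemma G2 (f df : R -> R) tau K :
  (forall t, 0 < t < tau -> derivable_pt_lim f t (df t)) ->
  (forall t, 0 < t < tau -> - K * f t <= df t) -> right_cont0 f ->
  forall t, 0 < t < tau -> f 0 * exp (- K * t) <= f t.
Proof.
  intros Hd Hb Hr t Ht.
  assert (Hr' : right_cont0 (fun s => - f s)).
  { apply (rc_comp f (fun x => - x)); auto. intros e He; exists e; split; auto; intros y Hy.
    replace (- y - - f 0) with (- (y - f 0)) by ring. rewrite Rabs_Ropp; auto. }
  pose proof (G1 (fun s => - f s) (fun s => - df s) tau (- K)) as HG.
  assert (- f t <= - f 0 * exp (- K * t)).
  { apply HG; auto. intros s Hs; apply derivable_pt_lim_opp; auto.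
    intros s Hs. specialize (Hb s Hs). lra. }
  lra.
Qed.

Definition sbox b g tau M R10 R20 (x1 x2 : R -> R) :=
  ode_on b g 0 tau x1 x2 /\ right_cont0 x1 /\ right_cont0 x2 /\ x1 0 = R10 /\ x2 0 = R20 /\
  forall t, 0 < t < tau -> Rabs (x1 t) <= M /\ Rabs (x2 t) <= M.

Lemma rc_sq f : right_cont0 f -> right_cont0 (fun t => f t ^ 2).
Proof. intros H. simpl. apply rc_mult; auto. apply rc_mult; auto. apply rc_const. Qed.

Lemma Q_deriv b g a c x1 x2 : ode_on b g a c x1 x2 -> forall t, a < t < c ->
  derivable_pt_lim (fun s => x2 s ^ 2) t (- (g + 1) * x1 t * x2 t ^ 2).
Proof.
  intros Ho t Ht. destruct (Ho t Ht) as [_ H2]. apply dpl_of_is_derive.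
  assert (HH := is_derive_of_dpl _ _ _ H2). auto_derive. { solve_ex. }
  replace (Derive (fun x => x2 x) t) with (- ((g + 1) / 2) * x1 t * x2 t) by (symmetry; apply is_derive_unique; auto). field.
Qed.

Lemma R2_zero b g tau M R10 x1 x2 : 1 < g -> sbox b g tau M R10 0 x1 x2 -> forall t, 0 < t < tau -> x2 t = 0.
Proof.
  intros Hg [Ho [H1 [H2 [E1 [E2 Hb]]]]] t Ht.
  pose proof (G1 (fun s => x2 s ^ 2) (fun s => - (g + 1) * x1 s * x2 s ^ 2) tau ((g + 1) * M)
    (Q_deriv b g 0 tau x1 x2 Ho)) as HG.
  assert (Hq : x2 t ^ 2 <= x2 0 ^ 2 * exp ((g + 1) * M * t)).
  { apply HG; auto; [|apply rc_sq; auto].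
    intros s Hs. destruct (Hb s Hs) as [B1 _]. apply Rabs_le_between in B1.
    assert (0 <= x2 s ^ 2) by (apply pow2_ge_0).
    assert (0 <= (g+1)*(M + x1 s)) by (apply Rmult_le_pos; lra).
    assert (0 <= (g+1)*(M + x1 s) * x2 s ^ 2) by (apply Rmult_le_pos; lra). nra. }
  rewrite E2 in Hq. simpl in Hq. rewrite Rmult_0_l, Rmult_0_l in Hq.
  nra.
Qed.

Lemma R2_nz b g tau M R10 R20 x1 x2 : 1 < g -> R20 <> 0 -> sbox b g tau M R10 R20 x1 x2 ->
  forall t, 0 < t < tau -> x2 t <> 0.
Proof.
  intros Hg Hn [Ho [H1 [H2 [E1 [E2 Hb]]]]] t Ht.
  pose proof (G2 (fun s => x2 s ^ 2) (fun s => - (g + 1) * x1 s * x2 s ^ 2) tau ((g + 1) * M)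
    (Q_deriv b g 0 tau x1 x2 Ho)) as HG.
  assert (Hq : x2 0 ^ 2 * exp (- ((g + 1) * M) * t) <= x2 t ^ 2).
  { apply HG; auto; [|apply rc_sq; auto].
    intros s Hs. destruct (Hb s Hs) as [B1 _]. apply Rabs_le_between in B1.
    assert (0 <= x2 s ^ 2) by (apply pow2_ge_0).
    assert (0 <= (g+1)*(M - x1 s)) by (apply Rmult_le_pos; lra).
    assert (0 <= (g+1)*(M - x1 s) * x2 s ^ 2) by (apply Rmult_le_pos; lra). nra. }
  rewrite E2 in Hq. intros Hz. rewrite Hz in Hq.
  assert (0 < R20 ^ 2) by (simpl; rewrite Rmult_1_r; exact (Rsqr_pos_lt R20 Hn)).
  pose proof (exp_pos (- ((g + 1) * M) * t)). simpl in Hq. nra.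
Qed.

Lemma Q_decr b g tau x1 x2 : 1 < g -> ode_on b g 0 tau x1 x2 -> right_cont0 x2 ->
  (forall t, 0 < t < tau -> 0 <= x1 t) -> forall t, 0 < t < tau -> x2 t ^ 2 <= x2 0 ^ 2.
Proof.
  intros Hg Ho H2 Hp t Ht.
  apply (mono0 (fun s => x2 s ^ 2) (fun s => - (g + 1) * x1 s * x2 s ^ 2) tau); auto.
  - apply (Q_deriv b g 0 tau x1 x2 Ho).
  - intros s Hs. specialize (Hp s Hs). assert (0 <= x2 s ^ 2) by apply pow2_ge_0.
    assert (0 <= (g+1) * x1 s) by (apply Rmult_le_pos; lra).
    assert (0 <= (g+1) * x1 s * x2 s ^ 2) by (apply Rmult_le_pos; lra). nra.
  - apply rc_sq; auto.
Qed.

Lemma inv_exp b g r1 r2 : r2 <> 0 ->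
  invariant b g r1 r2 = (r1 ^ 2 + (2 * b / (g - 1)) * r2 ^ 2) * exp ((- (4 / (g + 1)) / 2) * ln (r2 ^ 2)).
Proof.
  intros H. unfold invariant, Rpower. f_equal. f_equal.
  assert (0 < Rabs r2) by (apply Rabs_pos_lt; auto).
  replace (r2 ^ 2) with (Rabs r2 * Rabs r2) by (rewrite <- Rabs_mult; simpl; rewrite Rmult_1_r; apply Rabs_right; apply Rle_ge, Rle_0_sqr).
  rewrite ln_mult; auto. generalize (4 / (g + 1)); intros q. field.
Qed.

Lemma inv_deriv b g a c x1 x2 : 1 < g -> ode_on b g a c x1 x2 -> forall t, a < t < c -> x2 t <> 0 ->
  derivable_pt_lim (fun s => (x1 s ^ 2 + (2 * b / (g - 1)) * x2 s ^ 2) * exp ((- (4 / (g + 1)) / 2) * ln (x2 s ^ 2))) t 0.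
Proof.
  intros Hg Ho t Ht Hn. destruct (Ho t Ht) as [D1 D2]. apply dpl_of_is_derive.
  assert (HH1 := is_derive_of_dpl _ _ _ D1). assert (HH2 := is_derive_of_dpl _ _ _ D2).
  auto_derive.
  { solve_ex. rewrite Rmult_1_r. exact (Rsqr_pos_lt _ Hn). }
  replace (Derive (fun x => x1 x) t) with (- x1 t ^ 2 + b * x2 t ^ 2) by (symmetry; apply is_derive_unique; auto).
  replace (Derive (fun x => x2 x) t) with (- ((g + 1) / 2) * x1 t * x2 t) by (symmetry; apply is_derive_unique; auto).
  field. split; [auto|]. split; lra.
Qed.

Lemma partA b g : 1 < g -> forall (a c : R) (R1 R2 : R -> R),
  ode_on b g a c R1 R2 -> (forall t, a < t < c -> R2 t <> 0) ->
  forall s t, a < s < c -> a < t < c -> invariant b g (R1 s) (R2 s) = invariant b g (R1 t) (R2 t).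
Proof.
  intros Hg a c R1 R2 Ho Hn.
  apply (const_int (fun s => invariant b g (R1 s) (R2 s)) a c).
  intros t Ht.
  apply (dpl_ext_loc (fun s => (R1 s ^ 2 + (2 * b / (g - 1)) * R2 s ^ 2) * exp ((- (4 / (g + 1)) / 2) * ln (R2 s ^ 2)))).
  - exists (Rmin (t - a) (c - t)). split. { apply Rmin_pos; lra. }
    intros s Hs. pose proof (Rmin_l (t - a) (c - t)). pose proof (Rmin_r (t - a) (c - t)).
    apply Rabs_lt_between in Hs. symmetry. apply inv_exp. apply Hn. lra.
  - apply (inv_deriv b g a c); auto.
Qed.

Lemma rc_const_eq (h : R -> R) tau : right_cont0 h -> 0 < tau ->
  (forall s t, 0 < s < tau -> 0 < t < tau -> h s = h t) -> forall t, 0 < t < tau -> h t = h 0.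
Proof.
  intros Hr Ht He t Htt. destruct (Req_dec (h t) (h 0)) as [|Hn]; auto. exfalso.
  destruct (Hr (Rabs (h t - h 0)) ltac:(apply Rabs_pos_lt; lra)) as [d [Hd H1]].
  set (s := Rmin (d/2) t). assert (0 < s) by (apply Rmin_pos; lra).
  assert (s <= d/2) by apply Rmin_l. assert (s <= t) by apply Rmin_r.
  specialize (H1 s ltac:(lra)). rewrite (He s t) in H1 by lra. lra.
Qed.

Lemma ct_Rpower y q : 0 < y -> ct (fun x => Rpower x q) y.
Proof. intros H. apply (derivable_ct _ _ (q * Rpower y (q - 1))). apply derivable_pt_lim_power; auto. Qed.

Lemma rc_invariant b g x1 x2 : right_cont0 x1 -> right_cont0 x2 -> x2 0 <> 0 ->
  right_cont0 (fun t => invariant b g (x1 t) (x2 t)).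
Proof.
  intros H1 H2 Hn. unfold invariant.
  apply rc_mult.
  - apply rc_plus. apply rc_sq; auto. apply rc_mult. apply rc_const. apply rc_sq; auto.
  - apply (rc_comp (fun t => Rabs (x2 t)) (fun y => Rpower y _)).
    + apply (rc_comp x2 Rabs); auto. apply ct_abs. intros e He; exists e; split; auto.
    + apply ct_Rpower. apply Rabs_pos_lt; auto.
Qed.

Lemma inv_const b g tau M R10 R20 x1 x2 : 1 < g -> R20 <> 0 -> 0 < tau -> sbox b g tau M R10 R20 x1 x2 ->
  forall t, 0 < t < tau -> invariant b g (x1 t) (x2 t) = invariant b g R10 R20.
Proof.
  intros Hg Hn Ht Hs. pose proof (R2_nz b g tau M R10 R20 x1 x2 Hg Hn Hs) as Hnz.
  destruct Hs as [Ho [H1 [H2 [E1 [E2 Hb]]]]].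
  rewrite <- E1, <- E2.
  apply (rc_const_eq (fun t => invariant b g (x1 t) (x2 t)) tau); auto.
  - apply rc_invariant; auto. congruence.
  - intros s t Hs' Ht'. apply (partA b g Hg 0 tau x1 x2 Ho Hnz); auto.
Qed.

Lemma inv_E b g r1 r2 : r2 <> 0 ->
  r1 ^ 2 + (2 * b / (g - 1)) * r2 ^ 2 = invariant b g r1 r2 * Rpower (Rabs r2) (4 / (g + 1)).
Proof.
  intros H. unfold invariant. rewrite Rmult_assoc, <- Rpower_plus.
  replace (- (4 / (g + 1)) + 4 / (g + 1)) with 0 by ring. rewrite Rpower_O. ring.
  apply Rabs_pos_lt; auto.
Qed.

Lemma Rpower2 Y : 0 < Y -> Rpower Y 2 = Y ^ 2.
Proof. intros H. replace 2 with (INR 2) by (simpl; ring). apply Rpower_pow; auto. Qed.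

Lemma Rpower_pos' y q : 0 < Rpower y q.
Proof. unfold Rpower. apply exp_pos. Qed.

Lemma ypow_key Y p k C : 0 < Y -> k * Y ^ 2 <= C * Rpower Y p -> k * Rpower Y (2 - p) <= C.
Proof.
  intros HY H. rewrite <- Rpower2 in H by auto.
  replace (2 - p) with (2 + - p) by ring. rewrite Rpower_plus.
  pose proof (Rpower_pos' Y (-p)).
  apply Rmult_le_compat_r with (r := Rpower Y (-p)) in H; [|lra].
  rewrite (Rmult_assoc C), <- Rpower_plus, Rplus_opp_r, Rpower_O in H by auto. lra.
Qed.

Lemma Rpower_inv_exp Y q : 0 < Y -> q <> 0 -> Rpower (Rpower Y q) (1 / q) = Y.
Proof. intros HY Hq. rewrite Rpower_mult. replace (q * (1 / q)) with 1 by (field; auto). apply Rpower_1; auto. Qed.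

Lemma ypow_upper Y p k C : 0 < Y -> p < 2 -> 0 < k -> k * Y ^ 2 <= C * Rpower Y p ->
  Y <= Rpower (C / k) (1 / (2 - p)).
Proof.
  intros HY Hp Hk H. apply ypow_key in H; auto.
  pose proof (Rpower_pos' Y (2 - p)).
  assert (Rpower Y (2 - p) <= C / k).
  { apply Rmult_le_reg_l with k; auto. replace (k * (C / k)) with C by (field; lra). lra. }
  rewrite <- (Rpower_inv_exp Y (2 - p)) at 1 by (auto; lra).
  apply Rle_Rpower_l; [left; apply Rdiv_lt_0_compat; lra| lra].
Qed.

Lemma ypow_lower Y p k C : 0 < Y -> p < 2 -> k < 0 -> C < 0 -> k * Y ^ 2 <= C * Rpower Y p ->
  Rpower (C / k) (1 / (2 - p)) <= Y.
Proof.
  intros HY Hp Hk HC H. apply ypow_key in H; auto.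
  pose proof (Rpower_pos' Y (2 - p)).
  assert (C / k <= Rpower Y (2 - p)).
  { apply Rmult_le_reg_l with (- k); [lra|]. replace (- k * (C / k)) with (- C) by (field; lra). lra. }
  assert (0 < C / k) by (replace (C / k) with ((- C) / (- k)) by (field; lra); apply Rdiv_lt_0_compat; lra).
  rewrite <- (Rpower_inv_exp Y (2 - p)) by (auto; lra).
  apply Rle_Rpower_l; [left; apply Rdiv_lt_0_compat; lra| lra].
Qed.

Lemma p_bounds g : 1 < g -> 0 < 4 / (g + 1) < 2.
Proof. intros Hg. split. apply Rdiv_lt_0_compat; lra. apply Rmult_lt_reg_r with (g + 1); [lra|].
  unfold Rdiv. rewrite Rmult_assoc, Rinv_l by lra. lra. Qed.

Lemma abs_le_sq x : Rabs x <= 1 + x ^ 2.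
Proof. unfold Rabs; destruct Rcase_abs; nra. Qed.

Lemma bound_ii b g R10 R20 : 1 < g -> 0 < b -> R20 <> 0 -> exists B0, 0 <= B0 /\
  forall tau M x1 x2, 0 < tau -> sbox b g tau M R10 R20 x1 x2 ->
  forall t, 0 < t < tau -> Rabs (x1 t) <= B0 /\ Rabs (x2 t) <= B0.
Proof.
  intros Hg Hb Hn.
  set (C0 := invariant b g R10 R20). set (k := 2 * b / (g - 1)). set (p := 4 / (g + 1)).
  assert (Hk : 0 < k) by (unfold k; apply Rdiv_lt_0_compat; lra).
  destruct (p_bounds g Hg) as [Hp0 Hp2]. fold p in Hp0, Hp2.
  assert (HC : 0 < C0).
  { unfold C0, invariant. apply Rmult_lt_0_compat; [|apply Rpower_pos'].
    fold k. assert (0 < R20 ^ 2) by (simpl; rewrite Rmult_1_r; exact (Rsqr_pos_lt _ Hn)).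
    pose proof (pow2_ge_0 R10). nra. }
  set (Y0 := Rpower (C0 / k) (1 / (2 - p))).
  exists (Y0 + 1 + C0 * Rpower Y0 p).
  assert (HY0 : 0 < Y0) by apply Rpower_pos'.
  split. { pose proof (Rpower_pos' Y0 p). nra. }
  intros tau M x1 x2 Htau Hs t Ht.
  pose proof (R2_nz b g tau M R10 R20 x1 x2 Hg Hn Hs t Ht) as Hnz.
  pose proof (inv_const b g tau M R10 R20 x1 x2 Hg Hn Htau Hs t Ht) as Hi. fold C0 in Hi.
  pose proof (inv_E b g (x1 t) (x2 t) Hnz) as HE. rewrite Hi in HE. fold k p in HE.
  set (Y := Rabs (x2 t)) in *. assert (HY : 0 < Y) by (apply Rabs_pos_lt; auto).
  assert (HY2 : x2 t ^ 2 = Y ^ 2) by (unfold Y; rewrite <- pow2_abs; auto).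
  rewrite HY2 in HE.
  assert (Hle : k * Y ^ 2 <= C0 * Rpower Y p) by (pose proof (pow2_ge_0 (x1 t)); lra).
  pose proof (ypow_upper Y p k C0 HY Hp2 Hk Hle) as HYb. fold Y0 in HYb.
  assert (Rpower Y p <= Rpower Y0 p) by (apply Rle_Rpower_l; lra).
  assert (x1 t ^ 2 <= C0 * Rpower Y0 p).
  { assert (0 <= k * Y ^ 2) by (apply Rmult_le_pos; [lra| apply pow2_ge_0]).
    assert (C0 * Rpower Y p <= C0 * Rpower Y0 p) by (apply Rmult_le_compat_l; lra). lra. }
  pose proof (abs_le_sq (x1 t)). pose proof (Rpower_pos' Y0 p).
  split; nra.
Qed.

Lemma ric_exact b g tau M R10 R20 x1 x2 : 1 < g -> 0 <= R10 -> sbox b g tau M R10 R20 x1 x2 ->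
  (forall t, 0 < t < tau -> b * x2 t ^ 2 = 0) -> forall t, 0 < t < tau -> 0 <= x1 t <= R10.
Proof.
  intros Hg HR Hs Hz. destruct Hs as [Ho [H1 [H2 [E1 [E2 Hb]]]]].
  set (r := fun t => R10 / (1 + R10 * Rmax 0 t)).
  assert (Hrpos : forall t, 0 <= t -> 0 <= r t <= R10).
  { intros t Ht. unfold r. rewrite Rmax_right by lra. assert (1 <= 1 + R10 * t) by nra. split.
    apply Rdiv_le_0_compat; lra. apply Rmult_le_reg_r with (1 + R10 * t); [lra|].
    unfold Rdiv. rewrite Rmult_assoc, Rinv_l by lra. nra. }
  assert (Hrd : forall t, 0 < t -> derivable_pt_lim r t (- (r t) ^ 2)).
  { intros t Ht. apply (dpl_ext_loc (fun s => R10 / (1 + R10 * s))).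
    - exists t. split; auto. intros s Hs. apply Rabs_lt_between in Hs. unfold r. rewrite Rmax_right by lra. auto.
    - apply dpl_of_is_derive. assert (1 <= 1 + R10 * t) by nra. auto_derive. lra.
      unfold r. rewrite Rmax_right by lra. field. lra. }
  assert (Hrc : right_cont0 r).
  { apply ct_rc. apply (ct_comp (fun t => Rmax 0 t) (fun u => R10 / (1 + R10 * u))).
    - apply (ct_lip _ 1); [lra|]. intros; rewrite Rmult_1_l; apply Rmax_lip.
    - rewrite Rmax_left by lra. apply (derivable_ct _ _ (- R10 * R10 / (1 + R10 * 0) ^ 2)).
      apply dpl_of_is_derive. auto_derive. rewrite Rmult_0_r; lra. field; rewrite Rmult_0_r; lra. }
  assert (HD : forall t, 0 < t < tau -> (x1 t - r t) ^ 2 <= (x1 0 - r 0) ^ 2 * exp (2 * M * t)).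
  { apply (G1 (fun t => (x1 t - r t) ^ 2) (fun t => - 2 * (x1 t + r t) * (x1 t - r t) ^ 2) tau (2 * M)).
    - intros t Ht. destruct (Ho t Ht) as [D1 _]. rewrite (Hz t Ht), Rplus_0_r in D1.
      apply dpl_of_is_derive. assert (HH1 := is_derive_of_dpl _ _ _ D1).
      assert (HH2 := is_derive_of_dpl _ _ _ (Hrd t ltac:(lra))).
      auto_derive. solve_ex.
      replace (Derive (fun x => x1 x) t) with (- x1 t ^ 2) by (symmetry; apply is_derive_unique; auto).
      replace (Derive (fun x => r x) t) with (- r t ^ 2) by (symmetry; apply is_derive_unique; auto).
      ring.
    - intros t Ht. destruct (Hb t Ht) as [B1 _]. apply Rabs_le_between in B1.
      destruct (Hrpos t ltac:(lra)). pose proof (pow2_ge_0 (x1 t - r t)).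
      assert (0 <= (M - x1 t - r t + r t + r t) * (x1 t - r t) ^ 2) by (apply Rmult_le_pos; lra). nra.
    - apply rc_sq. apply rc_plus; auto. apply (rc_comp r (fun u => - u)); auto.
      intros e He; exists e; split; auto; intros y Hy. replace (- y - - r 0) with (- (y - r 0)) by ring. rewrite Rabs_Ropp; auto. }
  intros t Ht. specialize (HD t Ht).
  assert (r 0 = R10) by (unfold r; rewrite Rmax_left by lra; field; lra).
  rewrite E1, H in HD. rewrite Rminus_eq_0 in HD. simpl in HD. rewrite Rmult_0_l, Rmult_0_l in HD.
  assert (x1 t = r t) by nra. rewrite H0. apply Hrpos. lra.
Qed.

Lemma sign_keep (f : R -> R) tau : right_cont0 f -> 0 < f 0 -> (forall x, 0 < x < tau -> ct f x) ->
  (forall x, 0 < x < tau -> f x <> 0) -> forall t, 0 < t < tau -> 0 < f t.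
Proof.
  intros Hr H0 Hc Hn t Ht. destruct (Rlt_or_le 0 (f t)) as [|Hle]; auto. exfalso.
  destruct (first_hit f t ltac:(lra) Hr H0 ltac:(intros; apply Hc; lra) Hle) as [s [Hs [Hpos Hfs]]].
  assert (f s < 0) by (destruct (Rle_lt_or_eq_dec _ _ Hfs); auto; exfalso; apply (Hn s); lra).
  assert (Hm : - f s <= 0).
  { apply (ct_left_le (fun x => - f x) s 0).
    - apply (ct_comp f (fun u => - u)). apply Hc; lra. intros e He; exists e; split; auto; intros y Hy.
      replace (- y - - f s) with (- (y - f s)) by ring. rewrite Rabs_Ropp; auto.
    - lra.
    - intros y Hy. specialize (Hpos y ltac:(lra)). lra. }
  lra.
Qed.

Lemma bound_iii b g R10 R20 : 1 < g -> b < 0 -> 0 <= R10 -> R20 <> 0 ->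
  0 <= R10 ^ 2 + (2 * b / (g - 1)) * R20 ^ 2 ->
  forall tau M x1 x2, 0 < tau -> sbox b g tau M R10 R20 x1 x2 ->
  forall t, 0 < t < tau -> Rabs (x1 t) <= Rabs R10 + Rabs R20 /\ Rabs (x2 t) <= Rabs R10 + Rabs R20.
Proof.
  intros Hg Hb HR Hn HE tau M x1 x2 Htau Hs.
  set (k := 2 * b / (g - 1)) in *.
  assert (Hk : k < 0) by (unfold k; unfold Rdiv; assert (0 < / (g - 1)) by (apply Rinv_0_lt_compat; lra); nra).
  assert (HR2 : 0 < R20 ^ 2) by (simpl; rewrite Rmult_1_r; exact (Rsqr_pos_lt _ Hn)).
  assert (HR1 : 0 < R10) by (destruct (Rle_lt_or_eq_dec _ _ HR); auto; subst; simpl in HE; nra).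
  pose proof (R2_nz b g tau M R10 R20 x1 x2 Hg Hn Hs) as Hnz.
  pose proof (inv_const b g tau M R10 R20 x1 x2 Hg Hn Htau Hs) as Hi.
  assert (HC : 0 <= invariant b g R10 R20).
  { unfold invariant. fold k. apply Rmult_le_pos; auto. left; apply Rpower_pos'. }
  assert (Hx1nz : forall s, 0 < s < tau -> x1 s <> 0).
  { intros s Hs' Hz. pose proof (inv_E b g (x1 s) (x2 s) (Hnz s Hs')) as HE'. fold k in HE'.
    rewrite (Hi s Hs') in HE'. rewrite Hz in HE'.
    assert (0 < x2 s ^ 2) by (simpl; rewrite Rmult_1_r; exact (Rsqr_pos_lt _ (Hnz s Hs'))).
    pose proof (Rpower_pos' (Rabs (x2 s)) (4 / (g + 1))).
    assert (0 <= invariant b g R10 R20 * Rpower (Rabs (x2 s)) (4 / (g + 1))) by (apply Rmult_le_pos; lra).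
    simpl in HE'. nra. }
  destruct Hs as [Ho [H1 [H2 [E1 [E2 Hb']]]]].
  assert (Hpos : forall s, 0 < s < tau -> 0 < x1 s).
  { apply sign_keep; auto. lra. intros x Hx. destruct (Ho x Hx) as [D1 _]. apply (derivable_ct _ _ _ D1). }
  intros t Ht. split.
  - assert (x1 t <= x1 0).
    { apply (mono0 x1 (fun s => - x1 s ^ 2 + b * x2 s ^ 2) tau); auto.
      intros s Hs; apply Ho; auto.
      intros s Hs. pose proof (pow2_ge_0 (x1 s)). pose proof (pow2_ge_0 (x2 s)). nra. }
    specialize (Hpos t Ht). rewrite Rabs_right by lra. rewrite E1 in H. pose proof (Rabs_pos R20).
    rewrite (Rabs_right R10) by lra. lra.
  - assert (x2 t ^ 2 <= x2 0 ^ 2).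
    { apply (Q_decr b g tau x1 x2); auto. intros; left; apply Hpos; auto. }
    rewrite E2 in H. pose proof (Rabs_pos R10).
    assert (Rabs (x2 t) <= Rabs R20).
    { apply Rsqr_le_abs_0. unfold Rsqr. simpl in H. lra. }
    lra.
Qed.

Definition good_bound b g R10 R20 B0 :=
  0 <= B0 /\ Rabs R10 <= B0 /\ Rabs R20 <= B0 /\
  forall tau M x1 x2, 0 < tau -> sbox b g tau M R10 R20 x1 x2 ->
  forall t, 0 < t < tau -> Rabs (x1 t) <= B0 /\ Rabs (x2 t) <= B0.

Lemma gb_zero b g R10 : 1 < g -> 0 <= R10 -> good_bound b g R10 0 (Rabs R10).
Proof.
  intros Hg HR. split; [apply Rabs_pos|]. split; [lra|]. split; [rewrite Rabs_R0; apply Rabs_pos|].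
  intros tau M x1 x2 Htau Hs t Ht.
  pose proof (R2_zero b g tau M R10 x1 x2 Hg Hs) as Hz.
  pose proof (ric_exact b g tau M R10 0 x1 x2 Hg HR Hs) as Hr.
  assert (0 <= x1 t <= R10) by (apply Hr; auto; intros s Hs'; rewrite (Hz s Hs'); simpl; ring).
  rewrite (Hz t Ht), Rabs_R0. rewrite !Rabs_right by lra. lra.
Qed.

Lemma gb_b0 g R10 R20 : 1 < g -> 0 <= R10 -> good_bound 0 g R10 R20 (Rabs R10 + Rabs R20).
Proof.
  intros Hg HR. pose proof (Rabs_pos R10). pose proof (Rabs_pos R20).
  split; [lra|]. split; [lra|]. split; [lra|].
  intros tau M x1 x2 Htau Hs t Ht.
  pose proof (ric_exact 0 g tau M R10 R20 x1 x2 Hg HR Hs) as Hr.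
  assert (Hx : forall s, 0 < s < tau -> 0 <= x1 s <= R10) by (intros; apply Hr; auto; intros; ring).
  destruct Hs as [Ho [H1 [H2 [E1 [E2 Hb]]]]].
  assert (x2 t ^ 2 <= x2 0 ^ 2) by (apply (Q_decr 0 g tau x1 x2); auto; intros; apply Hx; auto).
  rewrite E2 in H3. assert (Rabs (x2 t) <= Rabs R20) by (apply Rsqr_le_abs_0; unfold Rsqr; simpl in H3; lra).
  destruct (Hx t Ht). rewrite (Rabs_right (x1 t)) by lra. rewrite (Rabs_right R10) in * by lra. lra.
Qed.

Lemma gb_ii b g R10 R20 : 1 < g -> 0 < b -> R20 <> 0 -> exists B0, good_bound b g R10 R20 B0.
Proof.
  intros Hg Hb Hn. destruct (bound_ii b g R10 R20 Hg Hb Hn) as [B [HB HB2]].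
  exists (B + Rabs R10 + Rabs R20). pose proof (Rabs_pos R10). pose proof (Rabs_pos R20).
  split; [lra|]. split; [lra|]. split; [lra|].
  intros. destruct (HB2 tau M x1 x2 H1 H2 t H3). lra.
Qed.

Lemma good_exists b g R10 R20 : 1 < g -> global_condition b g R10 R20 -> exists B0, good_bound b g R10 R20 B0.
Proof.
  intros Hg [[Hb HR]|[[Hb Hn]|[[Hb [HR HE]]|[Hz HR]]]].
  - destruct (Req_dec R20 0) as [Hz|Hn]. { subst. exists (Rabs R10). apply gb_zero; lra. }
    destruct (Rle_lt_or_eq_dec 0 b ltac:(lra)) as [Hbp|Hb0].
    + apply gb_ii; auto.
    + subst. exists (Rabs R10 + Rabs R20). apply gb_b0; lra.
  - apply gb_ii; auto.
  - destruct (Req_dec R20 0) as [Hz|Hn]. { subst. exists (Rabs R10). apply gb_zero; lra. }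
    exists (Rabs R10 + Rabs R20). pose proof (Rabs_pos R10). pose proof (Rabs_pos R20).
    split; [lra|]. split; [lra|]. split; [lra|].
    intros. apply (bound_iii b g R10 R20 Hg Hb) with (tau := tau) (M := M); auto; lra.
  - subst. exists (Rabs R10). apply gb_zero; lra.
Qed.

Lemma riccati (u du : R -> R) tau :
  (forall t, 0 < t < tau -> derivable_pt_lim u t (du t)) ->
  (forall t, 0 < t < tau -> du t <= - (u t) ^ 2) -> right_cont0 u -> u 0 < 0 -> tau <= - / u 0.
Proof.
  intros Hd Hb Hr H0.
  assert (Hneg : forall t, 0 < t < tau -> u t < 0).
  { intros t Ht. assert (u t <= u 0).
    { apply (mono0 u du tau); auto. intros s Hs. specialize (Hb s Hs). pose proof (pow2_ge_0 (u s)). lra. }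
    lra. }
  set (h := fun t => t + - / u t).
  assert (Hh : forall t, 0 < t < tau -> derivable_pt_lim h t (1 + du t / (u t) ^ 2)).
  { intros t Ht. apply dpl_of_is_derive. unfold h. assert (HH := is_derive_of_dpl _ _ _ (Hd t Ht)).
    specialize (Hneg t Ht). auto_derive. { solve_ex. lra. }
    replace (Derive (fun x => u x) t) with (du t) by (symmetry; apply is_derive_unique; auto). field. lra. }
  assert (Hhn : forall t, 0 < t < tau -> 1 + du t / (u t) ^ 2 <= 0).
  { intros t Ht. specialize (Hneg t Ht). specialize (Hb t Ht).
    assert (0 < u t ^ 2) by nra.
    assert (du t / u t ^ 2 <= -1).
    { apply Rmult_le_reg_r with (u t ^ 2); auto. unfold Rdiv. rewrite Rmult_assoc, Rinv_l by lra. lra. }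
    lra. }
  assert (Hrh : right_cont0 h).
  { unfold h. apply rc_plus. apply rc_id. apply (rc_comp u (fun x => - / x)); auto.
    apply (derivable_ct _ _ (/ (u 0) ^ 2)). apply dpl_of_is_derive. auto_derive. lra. field. lra. }
  destruct (Rle_dec tau (- / u 0)) as [|Hn]; auto. exfalso.
  assert (Hpos : 0 < - / u 0) by (assert (/ u 0 < 0) by (apply Rinv_lt_0_compat; auto); lra).
  set (t := - / u 0). assert (Ht : 0 < t < tau) by (unfold t; lra).
  pose proof (mono0 h _ tau Hh Hhn Hrh t Ht) as Hm. unfold h in Hm. rewrite Rplus_0_l in Hm.
  specialize (Hneg t Ht). assert (/ u t < 0) by (apply Rinv_lt_0_compat; auto).
  fold t in Hm. lra.
Qed.

Lemma dpl_shift (u : R -> R) a s l : derivable_pt_lim u (a + s) l -> derivable_pt_lim (fun x => u (a + x)) s l.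
Proof.
  intros H eps He. destruct (H eps He) as [d Hd]. exists d. intros h H1 H2.
  replace (a + (s + h)) with (a + s + h) by ring. apply Hd; auto.
Qed.

Definition bad_life b g R10 R20 T0 := forall tau M x1 x2, sbox b g tau M R10 R20 x1 x2 -> tau <= T0.

Lemma bad_A b g R10 R20 : 1 < g -> R10 < 0 -> (b <= 0 \/ R20 = 0) -> bad_life b g R10 R20 (- / R10).
Proof.
  intros Hg HR Hc tau M x1 x2 Hs.
  assert (Hz : forall t, 0 < t < tau -> b * x2 t ^ 2 <= 0).
  { intros t Ht. destruct Hc as [Hb|Hz].
    - pose proof (pow2_ge_0 (x2 t)). nra.
    - subst. rewrite (R2_zero b g tau M R10 x1 x2 Hg Hs t Ht). simpl. lra. }
  destruct Hs as [Ho [H1 [H2 [E1 [E2 Hb]]]]].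
  rewrite <- E1. apply (riccati x1 (fun s => - x1 s ^ 2 + b * x2 s ^ 2) tau); auto.
  - intros t Ht; apply Ho; auto.
  - intros t Ht. specialize (Hz t Ht). lra.
  - lra.
Qed.

Lemma bad_B b g R10 R20 : 1 < g -> b < 0 -> 0 <= R10 -> R10 ^ 2 + (2 * b / (g - 1)) * R20 ^ 2 < 0 ->
  exists T0, bad_life b g R10 R20 T0.
Proof.
  intros Hg Hb HR HE.
  set (k := 2 * b / (g - 1)) in *. set (p := 4 / (g + 1)).
  assert (Hk : k < 0) by (unfold k; unfold Rdiv; assert (0 < / (g - 1)) by (apply Rinv_0_lt_compat; lra); nra).
  assert (Hn : R20 <> 0) by (intros Hz; rewrite Hz in HE; pose proof (pow2_ge_0 R10); simpl in HE; lra).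
  destruct (p_bounds g Hg) as [Hp0 Hp2]. fold p in Hp0, Hp2.
  set (C0 := invariant b g R10 R20).
  assert (HC : C0 < 0).
  { unfold C0, invariant. fold k. pose proof (Rpower_pos' (Rabs R20) (- (4 / (g + 1)))). nra. }
  set (Y1 := Rpower (C0 / k) (1 / (2 - p))).
  assert (HY1 : 0 < Y1) by apply Rpower_pos'.
  set (beta := - b * Y1 ^ 2). assert (Hbeta : 0 < beta) by (unfold beta; assert (0 < Y1 ^ 2) by (apply pow_lt; lra); apply Rmult_lt_0_compat; lra).
  set (t1 := (R10 + 1) / beta). assert (Ht1 : 0 < t1) by (apply Rdiv_lt_0_compat; lra).
  exists (t1 + 1). intros tau M x1 x2 Hs.
  destruct (Rle_dec tau t1) as [|Hlt]; [lra|]. apply Rnot_le_lt in Hlt.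
  assert (Htau : 0 < tau) by lra.
  pose proof (R2_nz b g tau M R10 R20 x1 x2 Hg Hn Hs) as Hnz.
  pose proof (inv_const b g tau M R10 R20 x1 x2 Hg Hn Htau Hs) as Hi. fold C0 in Hi.
  assert (Hder : forall s, 0 < s < tau -> - x1 s ^ 2 + b * x2 s ^ 2 <= - beta /\ - x1 s ^ 2 + b * x2 s ^ 2 <= - x1 s ^ 2).
  { intros s Hs'. pose proof (inv_E b g (x1 s) (x2 s) (Hnz s Hs')) as HE'. fold k p in HE'.
    rewrite (Hi s Hs') in HE'.
    set (Y := Rabs (x2 s)) in *. assert (HY : 0 < Y) by (apply Rabs_pos_lt; auto).
    assert (HY2 : x2 s ^ 2 = Y ^ 2) by (unfold Y; rewrite <- pow2_abs; auto).
    rewrite HY2 in HE' |- *.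
    assert (Hle : k * Y ^ 2 <= C0 * Rpower Y p) by (pose proof (pow2_ge_0 (x1 s)); lra).
    pose proof (ypow_lower Y p k C0 HY Hp2 Hk HC Hle) as HYb. fold Y1 in HYb.
    assert (Y1 ^ 2 <= Y ^ 2) by (simpl; nra).
    pose proof (pow2_ge_0 (x1 s)). unfold beta. split; nra. }
  destruct Hs as [Ho [H1 [H2 [E1 [E2 Hb']]]]].
  assert (Hlin : x1 t1 + beta * t1 <= x1 0 + beta * 0).
  { apply (mono0 (fun s => x1 s + beta * s) (fun s => (- x1 s ^ 2 + b * x2 s ^ 2) + beta) tau).
    - intros s Hs'. apply derivable_pt_lim_plus. apply Ho; auto.
      replace beta with (beta * 1) at 2 by ring. apply derivable_pt_lim_scal, derivable_pt_lim_id.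
    - intros s Hs'. destruct (Hder s Hs'). lra.
    - apply rc_plus; auto. apply (rc_comp (fun s => s) (fun s => beta * s)). apply rc_id.
      apply (derivable_ct _ _ (beta * 1)). apply derivable_pt_lim_scal, derivable_pt_lim_id.
    - lra. }
  rewrite E1 in Hlin. assert (beta * t1 = R10 + 1) by (unfold t1; field; lra). assert (Hx1 : x1 t1 <= -1) by lra.
  assert (Hsh : tau - t1 <= - / x1 (t1 + 0)).
  { apply (riccati (fun s => x1 (t1 + s)) (fun s => - x1 (t1 + s) ^ 2 + b * x2 (t1 + s) ^ 2) (tau - t1)).
    - intros s Hs'. apply dpl_shift. apply Ho. lra.
    - intros s Hs'. apply Hder. lra.
    - apply ct_rc. apply (ct_comp (fun s => t1 + s) x1).
      + apply (ct_lip _ 1); [lra|]. intros y z. replace (t1 + y - (t1 + z)) with (y - z) by ring. lra.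
      + destruct (Ho (t1 + 0) ltac:(lra)) as [D1 _]. apply (derivable_ct _ _ _ D1).
    - rewrite Rplus_0_r. lra. }
  rewrite Rplus_0_r in Hsh.
  assert (- / x1 t1 <= 1).
  { assert (x1 t1 < 0) by lra. apply Rmult_le_reg_r with (- x1 t1); [lra|].
    replace (- / x1 t1 * - x1 t1) with 1 by (field; lra). lra. }
  lra.
Qed.

Lemma bad_exists b g R10 R20 : 1 < g -> ~ global_condition b g R10 R20 -> exists T0, bad_life b g R10 R20 T0.
Proof.
  intros Hg Hn. unfold global_condition in Hn.
  destruct (Rlt_or_le R10 0) as [HR|HR].
  - exists (- / R10). apply bad_A; auto.
    destruct (Rle_or_lt b 0) as [|Hb]; [left; auto|right].
    destruct (Req_dec R20 0); auto. exfalso; apply Hn; right; left; split; auto.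
  - assert (Hb : b < 0) by (destruct (Rlt_or_le b 0); auto; exfalso; apply Hn; left; lra).
    assert (Hz : R20 <> 0) by (intros Hz; apply Hn; right; right; right; split; auto; lra).
    assert (HE : R10 ^ 2 + (2 * b / (g - 1)) * R20 ^ 2 < 0).
    { destruct (Rlt_or_le (R10 ^ 2 + (2 * b / (g - 1)) * R20 ^ 2) 0); auto.
      exfalso; apply Hn; right; right; left; split; auto; split; lra. }
    apply bad_B; auto.
Qed.

Lemma huv w W u v : Rabs w <= W -> w * u * v <= W * (u ^ 2 + v ^ 2) / 2.
Proof.
  intros H. apply Rle_trans with (Rabs w * Rabs u * Rabs v).
  { rewrite <- !Rabs_mult. apply Rle_abs. }
  assert (2 * (Rabs u * Rabs v) <= u ^ 2 + v ^ 2).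
  { rewrite <- (pow2_abs u), <- (pow2_abs v). pose proof (pow2_ge_0 (Rabs u - Rabs v)). simpl in *. nra. }
  pose proof (Rabs_pos u). pose proof (Rabs_pos v). pose proof (Rabs_pos w).
  assert (0 <= Rabs u * Rabs v) by (apply Rmult_le_pos; auto).
  assert (Rabs w * (Rabs u * Rabs v) <= W * (Rabs u * Rabs v)) by (apply Rmult_le_compat_r; auto).
  assert (0 <= W) by lra.
  assert (W * (2 * (Rabs u * Rabs v)) <= W * (u ^ 2 + v ^ 2)) by (apply Rmult_le_compat_l; auto).
  nra.
Qed.

Lemma rc_opp f : right_cont0 f -> right_cont0 (fun t => - f t).
Proof.
  intros H. apply (rc_comp f (fun u => - u)); auto. intros e He; exists e; split; auto; intros z Hz.
  replace (- z - - f 0) with (- (z - f 0)) by ring. rewrite Rabs_Ropp; auto.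
Qed.

Lemma uniq_sol b g tau M R10 R20 x1 x2 y1 y2 : 1 < g ->
  sbox b g tau M R10 R20 x1 x2 -> sbox b g tau M R10 R20 y1 y2 ->
  forall t, 0 < t < tau -> x1 t = y1 t /\ x2 t = y2 t.
Proof.
  intros Hg [Ho [H1 [H2 [E1 [E2 Hb]]]]] [Ho' [H1' [H2' [E1' [E2' Hb']]]]].
  set (c := (g + 1) / 2).
  set (K := M * (4 + 2 * Rabs b + 3 * c)).
  set (D := fun t => (x1 t - y1 t) ^ 2 + (x2 t - y2 t) ^ 2).
  set (dD := fun t => 2 * (x1 t - y1 t) * ((- x1 t ^ 2 + b * x2 t ^ 2) - (- y1 t ^ 2 + b * y2 t ^ 2)) +
                      2 * (x2 t - y2 t) * ((- ((g + 1) / 2) * x1 t * x2 t) - (- ((g + 1) / 2) * y1 t * y2 t))).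
  assert (HD : forall t, 0 < t < tau -> D t <= D 0 * exp (K * t)).
  { apply (G1 D dD tau K).
    - intros t Ht. destruct (Ho t Ht) as [A1 A2]. destruct (Ho' t Ht) as [B1 B2].
      apply dpl_of_is_derive. unfold D, dD.
      assert (HA1 := is_derive_of_dpl _ _ _ A1). assert (HA2 := is_derive_of_dpl _ _ _ A2).
      assert (HB1 := is_derive_of_dpl _ _ _ B1). assert (HB2 := is_derive_of_dpl _ _ _ B2).
      auto_derive. solve_ex.
      replace (Derive (fun x => x1 x) t) with (- x1 t ^ 2 + b * x2 t ^ 2) by (symmetry; apply is_derive_unique; auto).
      replace (Derive (fun x => x2 x) t) with (- ((g + 1) / 2) * x1 t * x2 t) by (symmetry; apply is_derive_unique; auto).
      replace (Derive (fun x => y1 x) t) with (- y1 t ^ 2 + b * y2 t ^ 2) by (symmetry; apply is_derive_unique; auto).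
      replace (Derive (fun x => y2 x) t) with (- ((g + 1) / 2) * y1 t * y2 t) by (symmetry; apply is_derive_unique; auto).
      ring.
    - intros t Ht. destruct (Hb t Ht) as [A1 A2]. destruct (Hb' t Ht) as [B1 B2].
      unfold dD, D.
      assert (Hc : 0 < c) by (unfold c; lra).
      assert (E : 2 * (x1 t - y1 t) * ((- x1 t ^ 2 + b * x2 t ^ 2) - (- y1 t ^ 2 + b * y2 t ^ 2)) +
                  2 * (x2 t - y2 t) * ((- ((g + 1) / 2) * x1 t * x2 t) - (- ((g + 1) / 2) * y1 t * y2 t)) =
                  (- 2 * (x1 t + y1 t)) * (x1 t - y1 t) ^ 2 + (2 * b * (x2 t + y2 t)) * (x1 t - y1 t) * (x2 t - y2 t) + (- 2 * c * x1 t) * (x2 t - y2 t) ^ 2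
                  + (- 2 * c * y2 t) * (x1 t - y1 t) * (x2 t - y2 t)) by (unfold c; ring).
      rewrite E. clear E. set (u := x1 t - y1 t). set (v := x2 t - y2 t).
      apply Rabs_le_between in A1. apply Rabs_le_between in A2. apply Rabs_le_between in B1. apply Rabs_le_between in B2.
      assert (T1 : (- 2 * (x1 t + y1 t)) * u ^ 2 <= 4 * M * u ^ 2).
      { pose proof (pow2_ge_0 u). assert (0 <= (4 * M + 2 * (x1 t + y1 t)) * u ^ 2) by (apply Rmult_le_pos; lra). lra. }
      assert (T2 : (2 * b * (x2 t + y2 t)) * u * v <= (4 * Rabs b * M) * (u ^ 2 + v ^ 2) / 2).
      { apply huv. rewrite !Rabs_mult. rewrite (Rabs_right 2) by lra.
        assert (Rabs (x2 t + y2 t) <= 2 * M) by (apply Rabs_le; lra).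
        pose proof (Rabs_pos b). nra. }
      assert (T3 : (- 2 * c * x1 t) * v ^ 2 <= 2 * c * M * v ^ 2).
      { pose proof (pow2_ge_0 v). assert (0 <= (2 * c * (M + x1 t)) * v ^ 2) by (apply Rmult_le_pos; [apply Rmult_le_pos|]; lra). lra. }
      assert (T4 : (- 2 * c * y2 t) * u * v <= (2 * c * M) * (u ^ 2 + v ^ 2) / 2).
      { apply huv. rewrite !Rabs_mult. replace (Rabs (-2)) with 2 by (unfold Rabs; destruct Rcase_abs; lra). rewrite (Rabs_right c) by lra.
        assert (Rabs (y2 t) <= M) by (apply Rabs_le; lra). nra. }
      unfold K. pose proof (pow2_ge_0 u). pose proof (pow2_ge_0 v). pose proof (Rabs_pos b).
      assert (HM : 0 <= M) by lra.
      assert (0 <= M * Rabs b * v ^ 2) by (apply Rmult_le_pos; [apply Rmult_le_pos|]; lra).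
      assert (0 <= M * Rabs b * u ^ 2) by (apply Rmult_le_pos; [apply Rmult_le_pos|]; lra).
      assert (0 <= M * c * u ^ 2) by (apply Rmult_le_pos; [apply Rmult_le_pos|]; lra).
      assert (0 <= M * c * v ^ 2) by (apply Rmult_le_pos; [apply Rmult_le_pos|]; lra).
      assert (0 <= M * v ^ 2) by (apply Rmult_le_pos; lra).
      nra.
    - unfold D. apply rc_plus; apply rc_sq; apply rc_plus; auto; apply rc_opp; auto. }
  intros t Ht. specialize (HD t Ht). unfold D in HD. rewrite E1, E2, E1', E2', !Rminus_eq_0 in HD.
  simpl in HD. rewrite !Rmult_0_l, Rplus_0_l, Rmult_0_l in HD.
  pose proof (pow2_ge_0 (x1 t - y1 t)). pose proof (pow2_ge_0 (x2 t - y2 t)).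
  simpl in *. split; apply Rminus_diag_uniq; apply Rsqr_0_uniq; unfold Rsqr; apply Rle_antisym; nra.
Qed.

Definition cl M x := Rmax (- M) (Rmin M x).

Lemma cl_bound M x : 0 <= M -> Rabs (cl M x) <= M.
Proof. intros H. unfold cl, Rmax, Rmin. repeat destruct Rle_dec; unfold Rabs; destruct Rcase_abs; lra. Qed.
Lemma cl_lip M x y : 0 <= M -> Rabs (cl M x - cl M y) <= Rabs (x - y).
Proof. intros H. unfold cl, Rmax, Rmin. repeat destruct Rle_dec; unfold Rabs; repeat destruct Rcase_abs; lra. Qed.
Lemma cl_id M x : Rabs x <= M -> cl M x = x.
Proof. intros H. apply Rabs_le_between in H. unfold cl, Rmax, Rmin. repeat destruct Rle_dec; lra. Qed.

Definition tf1 b M a a' := - (cl M a) ^ 2 + b * (cl M a') ^ 2.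
Definition tf2 g M a a' := - ((g + 1) / 2) * cl M a * cl M a'.

Lemma sq_diff_bound A A' M : Rabs A <= M -> Rabs A' <= M -> Rabs (A ^ 2 - A' ^ 2) <= 2 * M * Rabs (A - A').
Proof.
  intros H1 H2. replace (A ^ 2 - A' ^ 2) with ((A + A') * (A - A')) by ring. rewrite Rabs_mult.
  apply Rmult_le_compat_r; [apply Rabs_pos|]. eapply Rle_trans; [apply Rabs_triang| lra].
Qed.

Lemma prod_diff_bound A A' C C' M : Rabs A <= M -> Rabs C' <= M ->
  Rabs (A * C - A' * C') <= M * (Rabs (A - A') + Rabs (C - C')).
Proof.
  intros H1 H2. replace (A * C - A' * C') with (A * (C - C') + C' * (A - A')) by ring.
  eapply Rle_trans; [apply Rabs_triang|]. rewrite !Rabs_mult.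
  pose proof (Rabs_pos (A - A')). pose proof (Rabs_pos (C - C')).
  assert (Rabs A * Rabs (C - C') <= M * Rabs (C - C')) by (apply Rmult_le_compat_r; auto).
  assert (Rabs C' * Rabs (A - A') <= M * Rabs (A - A')) by (apply Rmult_le_compat_r; auto).
  lra.
Qed.

Lemma tf_lip b g M : 1 < g -> 0 < M ->
  lipB (tf1 b M) (2 * M * (1 + Rabs b + (g + 1) / 2) + 1) (M ^ 2 * (1 + Rabs b + (g + 1) / 2)) /\
  lipB (tf2 g M) (2 * M * (1 + Rabs b + (g + 1) / 2) + 1) (M ^ 2 * (1 + Rabs b + (g + 1) / 2)).
Proof.
  intros Hg HM. pose proof (Rabs_pos b) as Hb.
  assert (Hc : 0 < (g + 1) / 2) by lra.
  assert (Hcl : forall x, Rabs (cl M x) <= M) by (intros; apply cl_bound; lra).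
  assert (Hcll : forall x y, Rabs (cl M x - cl M y) <= Rabs (x - y)) by (intros; apply cl_lip; lra).
  assert (Hsq : forall x, Rabs (cl M x ^ 2) <= M ^ 2).
  { intros x. rewrite <- RPow_abs. apply pow_incr. split; [apply Rabs_pos| auto]. }
  split; split.
  - intros a a' c c'. unfold tf1.
    replace (- cl M a ^ 2 + b * cl M a' ^ 2 - (- cl M c ^ 2 + b * cl M c' ^ 2)) with
      (- (cl M a ^ 2 - cl M c ^ 2) + b * (cl M a' ^ 2 - cl M c' ^ 2)) by ring.
    eapply Rle_trans; [apply Rabs_triang|]. rewrite Rabs_Ropp, Rabs_mult.
    pose proof (sq_diff_bound _ _ M (Hcl a) (Hcl c)) as S1. pose proof (sq_diff_bound _ _ M (Hcl a') (Hcl c')) as S2.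
    pose proof (Hcll a c). pose proof (Hcll a' c').
    pose proof (Rabs_pos (a - c)). pose proof (Rabs_pos (a' - c')).
    pose proof (Rabs_pos (cl M a' ^ 2 - cl M c' ^ 2)).
    assert (Rabs b * Rabs (cl M a' ^ 2 - cl M c' ^ 2) <= Rabs b * (2 * M * Rabs (a' - c'))) by (apply Rmult_le_compat_l; nra).
    set (L := 2 * M * (1 + Rabs b + (g + 1) / 2) + 1).
    assert (2 * M * Rabs (cl M a - cl M c) <= 2 * M * Rabs (a - c)) by (apply Rmult_le_compat_l; lra).
    assert (2 * M * Rabs (a - c) <= L * Rabs (a - c)) by (apply Rmult_le_compat_r; [lra| unfold L; nra]).
    assert (Rabs b * (2 * M * Rabs (a' - c')) <= L * Rabs (a' - c')).
    { rewrite <- Rmult_assoc. apply Rmult_le_compat_r; [lra| unfold L; nra]. }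
    lra.
  - intros a a'. unfold tf1. eapply Rle_trans; [apply Rabs_triang|]. rewrite Rabs_Ropp, Rabs_mult.
    pose proof (Hsq a). pose proof (Hsq a').
    assert (Rabs b * Rabs (cl M a' ^ 2) <= Rabs b * M ^ 2) by (apply Rmult_le_compat_l; auto).
    assert (0 <= M ^ 2 * (g + 1) / 2) by (apply Rmult_le_pos; [apply Rmult_le_pos|]; nra).
    nra.
  - intros a a' c c'. unfold tf2.
    replace (- ((g + 1) / 2) * cl M a * cl M a' - - ((g + 1) / 2) * cl M c * cl M c') with
      (- ((g + 1) / 2) * (cl M a * cl M a' - cl M c * cl M c')) by ring.
    rewrite Rabs_mult, Rabs_Ropp, (Rabs_right ((g + 1) / 2)) by lra.
    pose proof (prod_diff_bound (cl M a) (cl M c) (cl M a') (cl M c') M (Hcl a) (Hcl c')) as S.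
    pose proof (Hcll a c). pose proof (Hcll a' c').
    pose proof (Rabs_pos (a - c)). pose proof (Rabs_pos (a' - c')).
    assert (Rabs (cl M a * cl M a' - cl M c * cl M c') <= M * (Rabs (a - c) + Rabs (a' - c'))) by nra.
    assert ((g + 1) / 2 * Rabs (cl M a * cl M a' - cl M c * cl M c') <= (g + 1) / 2 * (M * (Rabs (a - c) + Rabs (a' - c')))) by (apply Rmult_le_compat_l; lra).
    assert ((g + 1) / 2 * (M * (Rabs (a - c) + Rabs (a' - c'))) <= (2 * M * (1 + Rabs b + (g + 1) / 2) + 1) * (Rabs (a - c) + Rabs (a' - c'))).
    { rewrite <- Rmult_assoc. apply Rmult_le_compat_r; [lra| nra]. }
    lra.
  - intros a a'. unfold tf2. rewrite !Rabs_mult, Rabs_Ropp, (Rabs_right ((g + 1) / 2)) by lra.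
    pose proof (Hcl a). pose proof (Hcl a'). pose proof (Rabs_pos (cl M a)). pose proof (Rabs_pos (cl M a')).
    assert (Rabs (cl M a) * Rabs (cl M a') <= M * M) by (apply Rmult_le_compat; auto).
    assert ((g + 1) / 2 * Rabs (cl M a) * Rabs (cl M a') <= (g + 1) / 2 * (M * M)) by (rewrite Rmult_assoc; apply Rmult_le_compat_l; lra).
    assert (0 <= M * M * Rabs b) by (apply Rmult_le_pos; nra).
    simpl. nra.
Qed.

Definition tsol b g M R10 R20 (y1 y2 : R -> R) :=
  y1 0 = R10 /\ y2 0 = R20 /\ (forall x, ct y1 x /\ ct y2 x) /\
  forall t, 0 < t -> derivable_pt_lim y1 t (tf1 b M (y1 t) (y2 t)) /\ derivable_pt_lim y2 t (tf2 g M (y1 t) (y2 t)).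

Lemma trunc_sol b g M R10 R20 : 1 < g -> 0 < M -> exists y1 y2, tsol b g M R10 R20 y1 y2.
Proof.
  intros Hg HM. destruct (tf_lip b g M Hg HM) as [H1 H2].
  apply (picard _ _ R10 R20 _ _ H1 H2). pose proof (Rabs_pos b). nra.
Qed.

Lemma trunc_box b g M R10 R20 y1 y2 tau : tsol b g M R10 R20 y1 y2 ->
  (forall t, 0 < t < tau -> Rabs (y1 t) <= M /\ Rabs (y2 t) <= M) -> sbox b g tau M R10 R20 y1 y2.
Proof.
  intros [E1 [E2 [Hc Hd]]] Hb. split; [|split; [|split; [|split; [|split]]]]; auto.
  - intros t Ht. destruct (Hd t ltac:(lra)) as [D1 D2]. destruct (Hb t Ht) as [B1 B2].
    unfold tf1, tf2 in *. rewrite !cl_id in D1, D2 by auto. auto.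
  - apply ct_rc, Hc.
  - apply ct_rc, Hc.
Qed.

Lemma global_exist b g R10 R20 B0 : 1 < g -> good_bound b g R10 R20 B0 ->
  exists R1 R2 : R -> R, ivp_sol_global b g R10 R20 R1 R2 /\
    exists M, forall t, 0 <= t -> Rabs (R1 t) + Rabs (R2 t) <= M.
Proof.
  intros Hg [HB0 [HR1 [HR2 Hgb]]].
  set (M := 2 * B0 + 1).
  destruct (trunc_sol b g M R10 R20 Hg ltac:(unfold M; lra)) as [y1 [y2 Hts]].
  pose proof Hts as [E1 [E2 [Hc Hd]]].
  set (N := fun t => Rabs (y1 t) + Rabs (y2 t)).
  assert (HNc : forall x, ct N x) by (intros; unfold N; apply ct_plus; apply ct_abs; apply Hc).
  assert (Hall : forall t, 0 <= t -> N t <= 2 * B0).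
  { intros t0 Ht0. destruct (Rle_dec (N t0) (2 * B0)) as [|Hn]; auto. exfalso.
    apply Rnot_le_lt in Hn.
    set (Lv := Rmin (N t0) M).
    assert (HLv : 2 * B0 < Lv) by (unfold Lv, M; apply Rmin_glb_lt; lra).
    assert (HLvM : Lv <= M) by apply Rmin_r. assert (HLvN : Lv <= N t0) by apply Rmin_l.
    assert (HN0 : N 0 <= 2 * B0) by (unfold N; rewrite E1, E2; lra).
    destruct (first_hit (fun t => Lv - N t) t0 Ht0) as [tau [Htau [Hpos Hf]]].
    - apply ct_rc. apply ct_minus; [apply ct_const| apply HNc].
    - lra.
    - intros x _. apply ct_minus; [apply ct_const| apply HNc].
    - lra.
    - assert (Hs : sbox b g tau M R10 R20 y1 y2).
      { apply trunc_box; auto. intros t Ht. specialize (Hpos t ltac:(lra)). unfold N in Hpos.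
        pose proof (Rabs_pos (y1 t)). pose proof (Rabs_pos (y2 t)). split; lra. }
      assert (HNb : N tau <= 2 * B0).
      { apply ct_left_le; auto. lra. intros y Hy. destruct (Hgb tau M y1 y2 ltac:(lra) Hs y Hy). unfold N. lra. }
      lra. }
  exists y1, y2. split.
  - split; [|split; [|split; [|split]]]; auto; try (apply ct_rc, Hc).
    intros T HT. assert (Hs : sbox b g T M R10 R20 y1 y2).
    { apply trunc_box; auto. intros t Ht. specialize (Hall t ltac:(lra)). unfold N in Hall.
      pose proof (Rabs_pos (y1 t)). pose proof (Rabs_pos (y2 t)). unfold M. split; lra. }
    apply Hs.
  - exists (2 * B0). intros t Ht. apply Hall; auto.
Qed.

Lemma sbox_mono b g tau M R10 R20 x1 x2 tau' M' : sbox b g tau M R10 R20 x1 x2 -> tau' <= tau -> M <= M' ->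
  sbox b g tau' M' R10 R20 x1 x2.
Proof.
  intros [Ho [H1 [H2 [E1 [E2 Hb]]]]] Ht HM. split; [|split; [|split; [|split; [|split]]]]; auto.
  - intros t Htt. apply Ho. lra.
  - intros t Htt. destruct (Hb t ltac:(lra)). lra.
Qed.

Lemma necessary b g R10 R20 : 1 < g ->
  (exists R1 R2 : R -> R, ivp_sol_global b g R10 R20 R1 R2 /\
     exists M, forall t, 0 <= t -> Rabs (R1 t) + Rabs (R2 t) <= M) -> global_condition b g R10 R20.
Proof.
  intros Hg [R1 [R2 [[Ho [H1 [H2 [E1 E2]]]] [M HM]]]].
  apply NNPP. intros Hn. destruct (bad_exists b g R10 R20 Hg Hn) as [T0 HT0].
  set (tau := Rabs T0 + 1). assert (Htau : 0 < tau) by (unfold tau; pose proof (Rabs_pos T0); lra).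
  assert (Hs : sbox b g tau M R10 R20 R1 R2).
  { split; [|split; [|split; [|split; [|split]]]]; auto.
    intros t Ht. specialize (HM t ltac:(lra)). pose proof (Rabs_pos (R1 t)). pose proof (Rabs_pos (R2 t)). split; lra. }
  specialize (HT0 tau M R1 R2 Hs). unfold tau in HT0. pose proof (Rle_abs T0). lra.
Qed.

Lemma blowup b g R10 R20 : 1 < g -> ~ global_condition b g R10 R20 ->
  exists T, T > 0 /\ exists R1 R2 : R -> R,
    ivp_sol_upto b g T R10 R20 R1 R2 /\
    forall M, exists t, 0 <= t < T /\ Rabs (R1 t) + Rabs (R2 t) > M.
Proof.
  intros Hg Hn. destruct (bad_exists b g R10 R20 Hg Hn) as [T0 HT0].
  set (S0 := Rabs R10 + Rabs R20).
  assert (HS0 : 0 <= S0) by (unfold S0; pose proof (Rabs_pos R10); pose proof (Rabs_pos R20); lra).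
  set (Mn := fun n : nat => S0 + INR n + 1).
  assert (HMn : forall n, S0 + 1 <= Mn n) by (intros; unfold Mn; pose proof (pos_INR n); lra).
  assert (Hch : forall n : nat, {p : (R -> R) * (R -> R) | tsol b g (Mn n) R10 R20 (fst p) (snd p)}).
  { intros n. apply constructive_indefinite_description.
    destruct (trunc_sol b g (Mn n) R10 R20 Hg ltac:(specialize (HMn n); lra)) as [y1 [y2 Hy]].
    exists (y1, y2). exact Hy. }
  set (Y1 := fun n => fst (proj1_sig (Hch n))). set (Y2 := fun n => snd (proj1_sig (Hch n))).
  assert (HY : forall n, tsol b g (Mn n) R10 R20 (Y1 n) (Y2 n)) by (intros; unfold Y1, Y2; apply (proj2_sig (Hch n))).
  set (Nn := fun n t => Rabs (Y1 n t) + Rabs (Y2 n t)).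
  assert (HNc : forall n x, ct (Nn n) x) by (intros; unfold Nn; apply ct_plus; apply ct_abs; apply (HY n)).
  assert (HN0 : forall n, Nn n 0 = S0) by (intros; unfold Nn; destruct (HY n) as [E1 [E2 _]]; rewrite E1, E2; auto).
  assert (Hbox : forall n tau, (forall t, 0 <= t < tau -> Nn n t < Mn n) -> sbox b g tau (Mn n) R10 R20 (Y1 n) (Y2 n)).
  { intros n tau H. apply trunc_box; auto. intros t Ht. specialize (H t ltac:(lra)). unfold Nn in H.
    pose proof (Rabs_pos (Y1 n t)). pose proof (Rabs_pos (Y2 n t)). split; lra. }
  assert (Hex : forall n, exists tau, 0 < tau /\ (forall t, 0 <= t < tau -> Nn n t < Mn n) /\ Mn n <= Nn n tau).
  { intros n. destruct (classic (forall t, 0 <= t -> Nn n t < Mn n)) as [Hall|Hno].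
    - exfalso. set (tau := Rabs T0 + 1).
      assert (Hs := Hbox n tau (fun t Ht => Hall t (proj1 Ht))).
      specialize (HT0 _ _ _ _ Hs). unfold tau in HT0. pose proof (Rle_abs T0). lra.
    - apply not_all_ex_not in Hno. destruct Hno as [t0 Ht0].
      apply imply_to_and in Ht0. destruct Ht0 as [Ht0 Hge]. apply Rnot_lt_le in Hge.
      destruct (first_hit (fun t => Mn n - Nn n t) t0 Ht0) as [tau [Htau [Hpos Hf]]].
      + apply ct_rc. apply ct_minus; [apply ct_const| apply HNc].
      + rewrite HN0. specialize (HMn n). lra.
      + intros x _. apply ct_minus; [apply ct_const| apply HNc].
      + lra.
      + exists tau. split; [lra|]. split; [|lra]. intros t Ht. specialize (Hpos t Ht). lra. }
  assert (Htc : forall n, {tau | 0 < tau /\ (forall t, 0 <= t < tau -> Nn n t < Mn n) /\ Mn n <= Nn n tau})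
    by (intros; apply constructive_indefinite_description; auto).
  set (tau := fun n => proj1_sig (Htc n)).
  assert (Htau : forall n, 0 < tau n /\ (forall t, 0 <= t < tau n -> Nn n t < Mn n) /\ Mn n <= Nn n (tau n))
    by (intros; unfold tau; apply (proj2_sig (Htc n))).
  assert (HsN : forall n, sbox b g (tau n) (Mn n) R10 R20 (Y1 n) (Y2 n)) by (intros; apply Hbox, Htau).
  assert (HtT0 : forall n, tau n <= T0) by (intros; apply (HT0 _ _ _ _ (HsN n))).
  assert (Hun : forall m n s, 0 <= s -> s < tau m -> s < tau n -> Y1 m s = Y1 n s /\ Y2 m s = Y2 n s).
  { intros m n s Hs Hm Hn'. destruct (Rle_lt_or_eq_dec 0 s Hs) as [Hsp|Hs0].
    - apply (uniq_sol b g (Rmin (tau m) (tau n)) (Mn m + Mn n) R10 R20); auto.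
      + apply (sbox_mono _ _ _ _ _ _ _ _ _ _ (HsN m)). apply Rmin_l. pose proof (HMn n). lra.
      + apply (sbox_mono _ _ _ _ _ _ _ _ _ _ (HsN n)). apply Rmin_r. pose proof (HMn m). lra.
      + split; auto. apply Rmin_glb_lt; auto.
    - subst. destruct (HY m) as [E1 [E2 _]]. destruct (HY n) as [E1' [E2' _]]. rewrite E1, E2, E1', E2'. auto. }
  set (E := fun x => exists n, x = tau n).
  assert (HEb : bound E) by (exists T0; intros x [n ->]; auto).
  assert (HEe : exists x, E x) by (exists (tau 0%nat); exists 0%nat; auto).
  destruct (completeness E HEb HEe) as [T [HTub HTlub]].
  assert (HtT : forall n, tau n <= T) by (intros n; apply HTub; exists n; auto).
  assert (HbelT : forall t, t < T -> exists n, t < tau n).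
  { intros t Ht. apply NNPP. intros Hno. assert (T <= t).
    { apply HTlub. intros x [n ->]. destruct (Rle_dec (tau n) t); auto. exfalso; apply Hno; exists n; lra. }
    lra. }
  set (k := fun t => epsilon (inhabits 0%nat) (fun n => t < tau n)).
  set (X1 := fun t => Y1 (k t) t). set (X2 := fun t => Y2 (k t) t).
  assert (Hkey : forall n t, 0 <= t < tau n -> X1 t = Y1 n t /\ X2 t = Y2 n t).
  { intros n t Ht. assert (Hk : t < tau (k t)) by (apply (epsilon_spec (inhabits 0%nat) (fun n => t < tau n)); exists n; lra).
    unfold X1, X2. apply Hun; lra. }
  exists T. assert (HT : 0 < T) by (pose proof (HtT 0%nat); pose proof (Htau 0%nat); lra).
  split; [lra|]. exists X1, X2. split.
  - split; [|split; [|split; [|split]]].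
    + intros t Ht. destruct (HbelT t (proj2 Ht)) as [n Hn'].
      destruct (HsN n) as [Ho _]. destruct (Ho t ltac:(lra)) as [D1 D2].
      destruct (Hkey n t ltac:(lra)) as [K1 K2]. rewrite K1, K2.
      assert (Hloc : exists d, 0 < d /\ forall s, Rabs (s - t) < d -> Y1 n s = X1 s /\ Y2 n s = X2 s).
      { exists (Rmin t (tau n - t)). split. apply Rmin_pos; lra.
        intros s Hs. pose proof (Rmin_l t (tau n - t)). pose proof (Rmin_r t (tau n - t)).
        apply Rabs_lt_between in Hs. destruct (Hkey n s ltac:(lra)). auto. }
      destruct Hloc as [d [Hd Hl]].
      split; [apply (dpl_ext_loc (Y1 n)) | apply (dpl_ext_loc (Y2 n))]; auto;
        exists d; split; auto; intros s Hs; apply Hl; auto.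
    + intros eps He. destruct (HY 0%nat) as [_ [_ [Hc _]]]. destruct (ct_rc _ (proj1 (Hc 0)) eps He) as [d [Hd H]].
      exists (Rmin d (tau 0%nat)). split. { apply Rmin_pos; [lra| apply Htau]. }
      intros t Ht. pose proof (Rmin_l d (tau 0%nat)). pose proof (Rmin_r d (tau 0%nat)).
      destruct (Hkey 0%nat t ltac:(lra)) as [K1 _]. destruct (Hkey 0%nat 0 ltac:(pose proof (Htau 0%nat); lra)) as [K0 _].
      rewrite K1, K0. apply H. lra.
    + intros eps He. destruct (HY 0%nat) as [_ [_ [Hc _]]]. destruct (ct_rc _ (proj2 (Hc 0)) eps He) as [d [Hd H]].
      exists (Rmin d (tau 0%nat)). split. { apply Rmin_pos; [lra| apply Htau]. }
      intros t Ht. pose proof (Rmin_l d (tau 0%nat)). pose proof (Rmin_r d (tau 0%nat)).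
      destruct (Hkey 0%nat t ltac:(lra)) as [_ K1]. destruct (Hkey 0%nat 0 ltac:(pose proof (Htau 0%nat); lra)) as [_ K0].
      rewrite K1, K0. apply H. lra.
    + destruct (Hkey 0%nat 0 ltac:(pose proof (Htau 0%nat); lra)) as [K0 _]. rewrite K0. apply (HY 0%nat).
    + destruct (Hkey 0%nat 0 ltac:(pose proof (Htau 0%nat); lra)) as [_ K0]. rewrite K0. apply (HY 0%nat).
  - intros M. destruct (INR_archimed 1 M ltac:(lra)) as [n Hn']. rewrite Rmult_1_r in Hn'.
    destruct (Htau n) as [Hp [Hlt Hge]].
    destruct (HNc n (tau n) 1 ltac:(lra)) as [d [Hd Hc]].
    set (s := Rmax (tau n / 2) (tau n - d / 2)).
    assert (tau n / 2 <= s) by apply Rmax_l. assert (tau n - d / 2 <= s) by apply Rmax_r.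
    assert (s < tau n) by (apply Rmax_lub_lt; lra).
    exists s. split. { pose proof (HtT n). lra. }
    destruct (Hkey n s ltac:(lra)) as [K1 K2]. rewrite K1, K2. fold (Nn n s).
    specialize (Hc s ltac:(rewrite Rabs_left; lra)). apply Rabs_lt_between in Hc.
    unfold Mn in Hge. lra.
Qed.

Theorem mainTheorem4 (g b : R) (hg : 1 < g) :
  (* (a) conservation law on any interval where R2 <> 0 *)
  (forall (a c : R) (R1 R2 : R -> R),
     ode_on b g a c R1 R2 ->
     (forall t, a < t < c -> R2 t <> 0) ->
     forall s t, a < s < c -> a < t < c ->
       invariant b g (R1 s) (R2 s) = invariant b g (R1 t) (R2 t)) /\
  (* (b) global boundedness criterion / finite-time blow-up *)
  (forall R10 R20 : R,
     ((exists R1 R2 : R -> R, ivp_sol_global b g R10 R20 R1 R2 /\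
         exists M, forall t, 0 <= t -> Rabs (R1 t) + Rabs (R2 t) <= M)
      <-> global_condition b g R10 R20) /\
     (~ global_condition b g R10 R20 ->
        exists T, T > 0 /\ exists R1 R2 : R -> R,
          ivp_sol_upto b g T R10 R20 R1 R2 /\
          forall M, exists t, 0 <= t < T /\ Rabs (R1 t) + Rabs (R2 t) > M)).
Proof.
  split.
  - apply partA; auto.
  - intros R10 R20. split; [split|].
    + apply necessary; auto.
    + intros Hc. destruct (good_exists b g R10 R20 hg Hc) as [B0 HB]. apply (global_exist b g R10 R20 B0); auto.
    + apply blowup; auto.
Qed.
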